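(* There exists an $\mathrm{mcDSQS}(v)$ for each $v\in\{20,26,32\}$.
   Context: A Steiner triple system $\mathrm{STS}(v)$ is a pair $(X,\mathcal{B})$ with $|X|=v$ and $\mathcal{B}$ a set of $3$-subsets (blocks) such that every $2$-subset of $X$ lies in exactly one block. A Steiner quadruple system $\mathrm{SQS}(v)$ is $(X,\mathcal{B})$ with $\mathcal{B}$ a set of $4$-subsets such that every $3$-subset lies in exactly one block; its derived design at $x$ is the $\mathrm{STS}(v-1)$ $(X\setminus\{x\},\{B\setminus\{x\}:x\in B\in\mathcal{B}\})$. A partial parallel class (PPC) of a set $Y$ is a collection of pairwise disjoint blocks contained in $Y$; an $r$-coloring of a design is a partition of its block set into $r$ PPCs of its point set. The chromatic index $\chi'(v)$ is the minimum over all $\mathrm{STS}(v)$ of the least $r$ admitting an $r$-coloring (for $v\equiv 1\pmod 6$, $v\ge 19$, it equals $\frac{v+1}{2}$). An $\mathrm{STS}(v)$ with a $\chi'(v)$-coloring is minimum colorable ($\mathrm{mcSTS}(v)$). An $\mathrm{mcDSQS}(v)$ is an $\mathrm{SQS}(v)$ whose derived design at every point is an $\mathrm{mcSTS}(v-1)$. *)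

(* Defs.v *)
From mathcomp Require Import all_boot.
Set Implicit Arguments. Unset Strict Implicit. Unset Printing Implicit Defensive.

Definition is_STS (T : finType) (X : {set T}) (B : {set {set T}}) : Prop :=
  (forall b, b \in B -> b \subset X /\ #|b| = 3) /\
  (forall p : {set T}, p \subset X -> #|p| = 2 ->
     exists! b, b \in B /\ p \subset b).

Definition is_SQS (T : finType) (X : {set T}) (B : {set {set T}}) : Prop :=
  (forall b, b \in B -> b \subset X /\ #|b| = 4) /\
  (forall p : {set T}, p \subset X -> #|p| = 3 ->
     exists! b, b \in B /\ p \subset b).

Definition derived (T : finType) (B : {set {set T}}) (x : T) : {set {set T}} :=
  [set b :\ x | b in B & x \in b].

(* An r-coloring: a partition of the block set into r partial parallel
   classes (color classes of pairwise disjoint blocks); empty classes allowed. *)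
Definition colorable (T : finType) (B : {set {set T}}) (r : nat) : Prop :=
  exists c : {set T} -> 'I_r,
    forall b1 b2, b1 \in B -> b2 \in B -> b1 != b2 -> c b1 = c b2 ->
      [disjoint b1 & b2].

Definition sts_r_colorable (v r : nat) : Prop :=
  exists B : {set {set 'I_v}}, is_STS [set: 'I_v] B /\ colorable B r.

Definition chromatic_index (v r : nat) : Prop :=
  sts_r_colorable v r /\ (forall r', sts_r_colorable v r' -> r <= r').

Definition mcSTS (T : finType) (X : {set T}) (B : {set {set T}}) : Prop :=
  is_STS X B /\ exists r, chromatic_index #|X| r /\ colorable B r.

Definition mcDSQS (v : nat) (B : {set {set 'I_v}}) : Prop :=
  is_SQS [set: 'I_v] B /\ forall x : 'I_v, mcSTS ([set: 'I_v] :\ x) (derived B x).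

(* Main.v *)
Require Import Defs.
From mathcomp Require Import all_boot.
Set Implicit Arguments. Unset Strict Implicit. Unset Printing Implicit Defensive.

Lemma pairs_le (n : nat) (B : {set {set 'I_n}}) :
  is_STS [set: 'I_n] B -> 'C(n, 2) <= 3 * #|B|.
Proof.
case=> Hb Hp.
have -> : 'C(n, 2) = #|[set p : {set 'I_n} | #|p| == 2]| by rewrite card_draws card_ord.
rewrite -sum1_card.
apply: (@leq_trans (\sum_(p in [set p : {set 'I_n} | #|p| == 2]) \sum_(b in B) ((p \subset b) : nat))).
  apply: leq_sum => p; rewrite inE => /eqP p2.
  have [b [[bB pb] _]] := Hp p (subsetT p) p2.
  by rewrite (bigD1 b) //= pb.
rewrite exchange_big /= mulnC -sum_nat_const.
apply: leq_sum => b bB.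
have [_ b3] := Hb b bB.
rewrite -big_mkcondr /= sum1_card.
apply: (@leq_trans #|[set b :\ z | z in b]|); last by rewrite -b3 leq_imset_card.
apply: subset_leq_card; apply/subsetP => p; rewrite unfold_in inE => /andP [/eqP p2 pb].
have : #|b :\: p| == 1 by rewrite cardsD (setIidPr pb) b3 p2.
case/cards1P => z bpz.
have zb : z \in b.
  have : z \in b :\: p by rewrite bpz set11.
  by rewrite inE => /andP [].
apply/imsetP; exists z => //.
by rewrite -bpz setDDr setDv set0U (setIidPr pb).
Qed.

Lemma class_le (n r : nat) (B : {set {set 'I_n}}) :
  is_STS [set: 'I_n] B -> colorable B r -> #|B| <= r * (n %/ 3).
Proof.
case=> Hb _ [c Hc].
rewrite -sum1_card (partition_big c predT) //=.
rewrite -[r in r * _]card_ord -sum_nat_const.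
apply: leq_sum => i _.
set C := [set b in B | c b == i].
have -> : \sum_(b in B | c b == i) 1 = #|C|.
  by rewrite sum1_card; apply: eq_card => b; rewrite inE.
rewrite leq_divRL //.
have tC : trivIset C.
  apply/trivIsetP => b1 b2; rewrite !inE => /andP [b1B /eqP c1] /andP [b2B /eqP c2] ne.
  by apply: Hc => //; rewrite c1 c2.
have <- : \sum_(b in C) #|b| = #|C| * 3.
  rewrite -sum1_card big_distrl /=; apply: eq_bigr => b; rewrite inE => /andP [bB _].
  by have [_ ->] := Hb b bB.
move: tC; rewrite /trivIset => /eqP ->.
by rewrite -[X in _ <= X]card_ord max_card.
Qed.

Definition mk n (l : seq nat) : {set 'I_n} := [set i : 'I_n | val i \in l].
Definition Bof n (bl : seq (seq nat)) : {set {set 'I_n}} := [set b | b \in map (mk n) bl].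

Lemma mem_mk n l (i : 'I_n) : (i \in mk n l) = (val i \in l).
Proof. by rewrite inE. Qed.

Lemma mem_Bof n bl b : (b \in Bof n bl) = (b \in map (mk n) bl).
Proof. by rewrite inE. Qed.

Lemma card_mk n l : uniq l -> all (fun a => a < n) l -> #|mk n l| = size l.
Proof.
move=> ul al; rewrite cardE -(size_map val); apply: perm_size.
apply: uniq_perm => //; first by rewrite (map_inj_uniq val_inj) enum_uniq.
move=> a; apply/mapP/idP => [[i]|al'].
  by rewrite mem_enum mem_mk => ? ->.
have an : a < n by move/allP: al => /(_ a al').
by exists (Ordinal an) => //; rewrite mem_enum mem_mk.
Qed.

Definition blocks_ok n k (bl : seq (seq nat)) :=
  all (fun l => [&& uniq l, all (fun a => a < n) l & size l == k]) bl.

Definition cnt3 (bl : seq (seq nat)) a b c :=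
  count (fun l => [&& a \in l, b \in l & c \in l]) bl.
Definition sqs_ok n bl :=
  all (fun a => all (fun b => all (fun c => cnt3 bl a b c == 1)
     (iota b.+1 (n - b.+1))) (iota a.+1 (n - a.+1))) (iota 0 n).
Definition cnt2 (bl : seq (seq nat)) a b :=
  count (fun l => (a \in l) && (b \in l)) bl.
Definition sts_ok n bl :=
  all (fun a => all (fun b => cnt2 bl a b == 1) (iota a.+1 (n - a.+1))) (iota 0 n).

Lemma count1_eq (T : eqType) (P : pred T) (s : seq T) x y :
  count P s = 1 -> x \in s -> y \in s -> P x -> P y -> x = y.
Proof.
elim: s => //= z s IH.
case Pz: (P z) => /=.
  move=> /eqP; rewrite add1n eqSS => /eqP c0.
  have nP : forall w, w \in s -> P w -> False.
    move=> w ws Pw; have : has P s by apply/hasP; exists w.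
    by rewrite has_count c0.
  rewrite !inE => /orP [/eqP ->|xs] /orP [/eqP ->|ys] Px Py //.
  - by case: (nP y).
  - by case: (nP x).
  - by case: (nP x).
rewrite add0n => c1; rewrite !inE => /orP [/eqP ->|xs] /orP [/eqP ->|ys] Px Py //.
- by rewrite Px in Pz.
- by rewrite Py in Pz.
by apply: IH.
Qed.

Lemma tri_sym (Q : nat -> nat -> nat -> bool) n :
 (forall x y z, Q x y z = Q y x z) -> (forall x y z, Q x y z = Q x z y) ->
 (forall x y z, x < y -> y < z -> z < n -> Q x y z) ->
 forall x y z, x != y -> x != z -> y != z -> x < n -> y < n -> z < n -> Q x y z.
Proof.
move=> s12 s23 H x y z.
case: (ltngtP x y) => [xy|yx|_] //.
- case: (ltngtP y z) => [yz|zy|_] //.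
  + by move=> *; apply: H.
  + case: (ltngtP x z) => [xz|zx|_] //.
    * by move=> *; rewrite s23; apply: H.
    * by move=> *; rewrite s23 s12; apply: H.
- case: (ltngtP x z) => [xz|zx|_] //.
  + by move=> *; rewrite s12; apply: H.
  + case: (ltngtP y z) => [yz|zy|_] //.
    * by move=> *; rewrite s12 s23; apply: H.
    * by move=> *; rewrite s12 s23 s12; apply: H.
Qed.

Lemma pair_sym (Q : nat -> nat -> bool) n :
 (forall x y, Q x y = Q y x) ->
 (forall x y, x < y -> y < n -> Q x y) ->
 forall x y, x != y -> x < n -> y < n -> Q x y.
Proof.
move=> s H x y; case: (ltngtP x y) => [xy|yx|_] //.
- by move=> *; apply: H.
- by move=> *; rewrite s; apply: H.
Qed.

Lemma card3 T (p : {set T}) : #|p| = 3 ->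
  exists a b c, [/\ a != b, a != c, b != c & p = a |: [set b; c]].
Proof.
move=> p3; have : 0 < #|p| by rewrite p3.
case/card_gt0P => a ap.
have : #|p :\ a| == 2 by move: p3; rewrite (cardsD1 a p) ap add1n => -[->].
case/cards2P => b [c [bc e]].
have bp : b \in p :\ a by rewrite e !inE eqxx.
have cp : c \in p :\ a by rewrite e !inE eqxx orbT.
exists a, b, c; split => //.
- by move: bp; rewrite !inE eq_sym => /andP [].
- by move: cp; rewrite !inE eq_sym => /andP [].
by rewrite -e setD1K.
Qed.

Lemma card2 T (p : {set T}) : #|p| = 2 ->
  exists a b, a != b /\ p = [set a; b].
Proof. by move/eqP/cards2P. Qed.

Lemma sqs_correct n bl : blocks_ok n 4 bl -> sqs_ok n bl ->
  is_SQS [set: 'I_n] (Bof n bl).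
Proof.
move=> /allP bo so; split.
  move=> b; rewrite mem_Bof => /mapP [l lbl ->]; split; first exact: subsetT.
  by have /and3P [u a /eqP s] := bo l lbl; rewrite card_mk.
have key : forall x y z, x != y -> x != z -> y != z -> x < n -> y < n -> z < n ->
    cnt3 bl x y z == 1.
  apply: tri_sym.
  - by move=> x y z; rewrite /cnt3; congr (_ == _); apply: eq_count => l; case: (x \in l); case: (y \in l).
  - by move=> x y z; rewrite /cnt3; congr (_ == _); apply: eq_count => l; case: (y \in l); case: (z \in l); rewrite ?andbF.
  move=> x y z xy yz zn.
  have yn : y < n by apply: ltn_trans yz zn.
  have xn : x < n by apply: ltn_trans xy yn.
  move: so => /allP /(_ x).
  rewrite mem_iota /= add0n => /(_ xn) /allP /(_ y).
  rewrite mem_iota xy subnKC // => /(_ yn) /allP /(_ z).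
  by rewrite mem_iota yz subnKC // => /(_ zn).
move=> p _ /card3 [a [b [c [ab ac bc ->]]]].
have sub : forall l, (a |: [set b; c] \subset mk n l) = [&& val a \in l, val b \in l & val c \in l].
  by move=> l; rewrite subUset !sub1set subUset !sub1set !mem_mk.
have /eqP c1 : cnt3 bl (val a) (val b) (val c) == 1 by apply: key; rewrite ?val_eqE ?ltn_ord.
have : has (fun l => [&& val a \in l, val b \in l & val c \in l]) bl by rewrite has_count /cnt3 in c1 *; rewrite c1.
case/hasP => l lbl Pl.
exists (mk n l); split.
  by split; [rewrite mem_Bof; apply: map_f | rewrite sub].
move=> b' []; rewrite mem_Bof => /mapP [l' l'bl ->]; rewrite sub => Pl'.
by rewrite (count1_eq c1 lbl l'bl Pl Pl').
Qed.

Lemma sts_correct n bl : blocks_ok n 3 bl -> sts_ok n bl ->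
  is_STS [set: 'I_n] (Bof n bl).
Proof.
move=> /allP bo so; split.
  move=> b; rewrite mem_Bof => /mapP [l lbl ->]; split; first exact: subsetT.
  by have /and3P [u a /eqP s] := bo l lbl; rewrite card_mk.
have key : forall x y, x != y -> x < n -> y < n -> cnt2 bl x y == 1.
  apply: pair_sym.
  - by move=> x y; rewrite /cnt2; congr (_ == _); apply: eq_count => l; rewrite andbC.
  move=> x y xy yn.
  have xn : x < n by apply: ltn_trans xy yn.
  move: so => /allP /(_ x).
  rewrite mem_iota /= add0n => /(_ xn) /allP /(_ y).
  by rewrite mem_iota xy subnKC // => /(_ yn).
move=> p _ /card2 [a [b [ab ->]]].
have sub : forall l, ([set a; b] \subset mk n l) = (val a \in l) && (val b \in l).
  by move=> l; rewrite subUset !sub1set !mem_mk.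
have /eqP c1 : cnt2 bl (val a) (val b) == 1 by apply: key; rewrite ?val_eqE ?ltn_ord.
have : has (fun l => (val a \in l) && (val b \in l)) bl by rewrite has_count /cnt2 in c1 *; rewrite c1.
case/hasP => l lbl Pl.
exists (mk n l); split.
  by split; [rewrite mem_Bof; apply: map_f | rewrite sub].
move=> b' []; rewrite mem_Bof => /mapP [l' l'bl ->]; rewrite sub => Pl'.
by rewrite (count1_eq c1 lbl l'bl Pl Pl').
Qed.

Definition col_ok r (dl : seq (seq nat)) (cols : seq nat) :=
  [&& size cols == size dl, all (fun c => c < r) cols &
   pairwise (fun p q : seq nat * nat => (p.2 == q.2) ==> ~~ has (fun a => a \in q.1) p.1)
     (zip dl cols)].

Lemma col_correct n r dl cols : col_ok r.+1 dl cols -> colorable (Bof n dl) r.+1.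
Proof.
case/and3P => /eqP sz /allP cr /(pairwiseP ([::], 0)) pw.
pose f b := find (fun l => mk n l == b) dl.
exists (fun b => inord (nth 0 cols (f b))).
have fP : forall b, b \in Bof n dl -> f b < size dl /\ mk n (nth [::] dl (f b)) = b.
  move=> b; rewrite mem_Bof => bm.
  have hb : has (fun l => mk n l == b) dl by apply/hasP; case/mapP: bm => l ? ->; exists l.
  by split; [rewrite -has_find | apply/eqP; apply: (nth_find [::] hb)].
have dis : forall i j, i < j -> j < size dl -> nth 0 cols i = nth 0 cols j ->
    [disjoint mk n (nth [::] dl i) & mk n (nth [::] dl j)].
  move=> i j ij jn e.
  have := pw i j; rewrite !inE size_zip sz minnn => /(_ (ltn_trans ij jn) jn ij).
  rewrite !nth_zip ?sz //= e eqxx /= => /hasPn H.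
  apply/pred0P => k /=; rewrite !mem_mk; apply/negbTE/andP => -[h1 h2].
  by move: (H _ h1); rewrite h2.
move=> b1 b2 b1B b2B ne ce.
have [f1 e1] := fP _ b1B; have [f2 e2] := fP _ b2B.
have c1 : nth 0 cols (f b1) < r.+1 by apply: cr; apply: mem_nth; rewrite sz.
have c2 : nth 0 cols (f b2) < r.+1 by apply: cr; apply: mem_nth; rewrite sz.
have ce' : nth 0 cols (f b1) = nth 0 cols (f b2).
  by move/(congr1 (@nat_of_ord _)): ce; rewrite !inordK.
rewrite -e1 -e2.
case: (ltngtP (f b1) (f b2)) => [lt|gt|eq].
- exact: dis.
- by rewrite disjoint_sym; apply: dis.
- by move: ne; rewrite -e1 -e2 eq eqxx.
Qed.

Definition dlist x (bl : seq (seq nat)) :=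
  map (filter (predC1 x)) (filter (fun l => x \in l) bl).

Lemma derived_Bof n bl (x : 'I_n) : derived (Bof n bl) x = Bof n (dlist (val x) bl).
Proof.
have mkD : forall l, mk n (filter (predC1 (val x)) l) = mk n l :\ x.
  by move=> l; apply/setP => i; rewrite !inE mem_filter /= val_eqE andbC.
apply/setP => b; rewrite mem_Bof /derived; apply/imsetP/mapP.
  case=> b0; rewrite inE => /andP [b0B xb0] ->; move: b0B xb0; rewrite mem_Bof => /mapP [l lbl ->] xb0.
  exists (filter (predC1 (val x)) l); last by rewrite mkD.
  by apply: map_f; rewrite mem_filter lbl andbT -mem_mk.
case=> l' /mapP [l]; rewrite mem_filter => /andP [xl lbl] -> ->.
exists (mk n l); last by rewrite mkD.
by rewrite inE mem_Bof map_f //= mem_mk.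
Qed.

Lemma derived_STS (T : finType) (X : {set T}) B x : x \in X -> is_SQS X B ->
  is_STS (X :\ x) (derived B x).
Proof.
move=> xX [Hb Hp]; split.
  move=> b' /imsetP [b]; rewrite inE => /andP [bB xb] ->.
  have [bX b4] := Hb b bB.
  split; first by rewrite setSD.
  by move: b4; rewrite (cardsD1 x b) xb add1n => -[].
move=> p; rewrite subsetD1 => /andP [pX xp] p2.
have q3 : #|x |: p| = 3 by rewrite cardsU1 xp p2.
have qX : x |: p \subset X by rewrite subUset sub1set xX pX.
have [b [[bB qb] bu]] := Hp _ qX q3.
have xb : x \in b by move: qb; rewrite subUset sub1set => /andP [].
have pb : p \subset b by move: qb; rewrite subUset => /andP [].
exists (b :\ x); split.
  split; first by apply/imsetP; exists b => //; rewrite inE bB.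
  by rewrite subsetD1 pb.
move=> b'' [/imsetP [b2]]; rewrite inE => /andP [b2B xb2] -> pb2.
congr (_ :\ x); apply: bu; split => //.
rewrite subUset sub1set xb2; apply: subset_trans pb2 _; exact: subD1set.
Qed.

Definition all_ok n r bl (colsl : seq (seq nat)) :=
  [&& blocks_ok n.+1 4 bl, sqs_ok n.+1 bl, blocks_ok n 3 (dlist n bl),
      sts_ok n (dlist n bl),
      all (fun x => col_ok r.+1 (dlist x bl) (nth [::] colsl x)) (iota 0 n.+1) &
      3 * (r * (n %/ 3)) < 'C(n, 2)].

Lemma assemble n r bl colsl : all_ok n r bl colsl ->
  exists B : {set {set 'I_n.+1}}, mcDSQS B.
Proof.
case/and5P => b4 sq b3 st /andP [/allP cl lb].
have ci : chromatic_index n r.+1.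
  split.
    exists (Bof n (dlist n bl)); split; first exact: sts_correct.
    apply: col_correct; have h : n \in iota 0 n.+1 by rewrite mem_iota add0n ltnSn.
    exact: (cl n h).
  move=> r' [B [HB Hc]].
  have h1 := pairs_le HB; have h2 := class_le HB Hc.
  rewrite ltnNge; apply/negP => r'r.
  have : 'C(n, 2) <= 3 * (r * (n %/ 3)).
    apply: (leq_trans h1); rewrite leq_mul2l /=; apply: (leq_trans h2).
    by rewrite leq_mul2r r'r orbT.
  by rewrite leqNgt lb.
have Hs := sqs_correct b4 sq.
exists (Bof n.+1 bl); split => // x.
split; first by apply: derived_STS => //; rewrite inE.
exists r.+1; split.
  by move: (cardsD1 x [set: 'I_n.+1]); rewrite cardsT card_ord inE add1n => -[<-].
rewrite derived_Bof; apply: col_correct; apply: (cl (val x)).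
by rewrite mem_iota ltn_ord.
Qed.
Definition bl20 : seq (seq nat) := [:: [:: 0; 1; 2; 12];
 [:: 0; 1; 3; 4];
 [:: 0; 1; 5; 9];
 [:: 0; 1; 6; 7];
 [:: 0; 1; 8; 13];
 [:: 0; 1; 10; 16];
 [:: 0; 1; 11; 19];
 [:: 0; 1; 14; 15];
 [:: 0; 1; 17; 18];
 [:: 0; 2; 3; 19];
 [:: 0; 2; 4; 9];
 [:: 0; 2; 5; 17];
 [:: 0; 2; 6; 15];
 [:: 0; 2; 7; 18];
 [:: 0; 2; 8; 16];
 [:: 0; 2; 10; 13];
 [:: 0; 2; 11; 14];
 [:: 0; 3; 5; 8];
 [:: 0; 3; 6; 16];
 [:: 0; 3; 7; 14];
 [:: 0; 3; 9; 11];
 [:: 0; 3; 10; 12];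
 [:: 0; 3; 13; 17];
 [:: 0; 3; 15; 18];
 [:: 0; 4; 5; 14];
 [:: 0; 4; 6; 12];
 [:: 0; 4; 7; 10];
 [:: 0; 4; 8; 19];
 [:: 0; 4; 11; 17];
 [:: 0; 4; 13; 18];
 [:: 0; 4; 15; 16];
 [:: 0; 5; 6; 19];
 [:: 0; 5; 7; 11];
 [:: 0; 5; 10; 15];
 [:: 0; 5; 12; 13];
 [:: 0; 5; 16; 18];
 [:: 0; 6; 8; 17];
 [:: 0; 6; 9; 13];
 [:: 0; 6; 10; 11];
 [:: 0; 6; 14; 18];
 [:: 0; 7; 8; 15];
 [:: 0; 7; 9; 17];
 [:: 0; 7; 12; 19];
 [:: 0; 7; 13; 16];
 [:: 0; 8; 9; 10];
 [:: 0; 8; 11; 18];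
 [:: 0; 8; 12; 14];
 [:: 0; 9; 12; 18];
 [:: 0; 9; 14; 16];
 [:: 0; 9; 15; 19];
 [:: 0; 10; 14; 17];
 [:: 0; 10; 18; 19];
 [:: 0; 11; 12; 16];
 [:: 0; 11; 13; 15];
 [:: 0; 12; 15; 17];
 [:: 0; 13; 14; 19];
 [:: 0; 16; 17; 19];
 [:: 1; 2; 3; 13];
 [:: 1; 2; 4; 5];
 [:: 1; 2; 6; 10];
 [:: 1; 2; 7; 8];
 [:: 1; 2; 9; 14];
 [:: 1; 2; 11; 17];
 [:: 1; 2; 15; 16];
 [:: 1; 2; 18; 19];
 [:: 1; 3; 5; 10];
 [:: 1; 3; 6; 18];
 [:: 1; 3; 7; 16];
 [:: 1; 3; 8; 19];
 [:: 1; 3; 9; 17];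
 [:: 1; 3; 11; 14];
 [:: 1; 3; 12; 15];
 [:: 1; 4; 6; 9];
 [:: 1; 4; 7; 17];
 [:: 1; 4; 8; 15];
 [:: 1; 4; 10; 12];
 [:: 1; 4; 11; 13];
 [:: 1; 4; 14; 18];
 [:: 1; 4; 16; 19];
 [:: 1; 5; 6; 15];
 [:: 1; 5; 7; 13];
 [:: 1; 5; 8; 11];
 [:: 1; 5; 12; 18];
 [:: 1; 5; 14; 19];
 [:: 1; 5; 16; 17];
 [:: 1; 6; 8; 12];
 [:: 1; 6; 11; 16];
 [:: 1; 6; 13; 14];
 [:: 1; 6; 17; 19];
 [:: 1; 7; 9; 18];
 [:: 1; 7; 10; 14];
 [:: 1; 7; 11; 12];
 [:: 1; 7; 15; 19];
 [:: 1; 8; 9; 16];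
 [:: 1; 8; 10; 18];
 [:: 1; 8; 14; 17];
 [:: 1; 9; 10; 11];
 [:: 1; 9; 12; 19];
 [:: 1; 9; 13; 15];
 [:: 1; 10; 13; 19];
 [:: 1; 10; 15; 17];
 [:: 1; 11; 15; 18];
 [:: 1; 12; 13; 17];
 [:: 1; 12; 14; 16];
 [:: 1; 13; 16; 18];
 [:: 2; 3; 4; 14];
 [:: 2; 3; 5; 6];
 [:: 2; 3; 7; 11];
 [:: 2; 3; 8; 9];
 [:: 2; 3; 10; 15];
 [:: 2; 3; 12; 18];
 [:: 2; 3; 16; 17];
 [:: 2; 4; 6; 11];
 [:: 2; 4; 7; 19];
 [:: 2; 4; 8; 17];
 [:: 2; 4; 10; 18];
 [:: 2; 4; 12; 15];
 [:: 2; 4; 13; 16];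
 [:: 2; 5; 7; 10];
 [:: 2; 5; 8; 18];
 [:: 2; 5; 9; 16];
 [:: 2; 5; 11; 13];
 [:: 2; 5; 12; 14];
 [:: 2; 5; 15; 19];
 [:: 2; 6; 7; 16];
 [:: 2; 6; 8; 14];
 [:: 2; 6; 9; 12];
 [:: 2; 6; 13; 19];
 [:: 2; 6; 17; 18];
 [:: 2; 7; 9; 13];
 [:: 2; 7; 12; 17];
 [:: 2; 7; 14; 15];
 [:: 2; 8; 10; 19];
 [:: 2; 8; 11; 15];
 [:: 2; 8; 12; 13];
 [:: 2; 9; 10; 17];
 [:: 2; 9; 11; 19];
 [:: 2; 9; 15; 18];
 [:: 2; 10; 11; 12];
 [:: 2; 10; 14; 16];
 [:: 2; 11; 16; 18];
 [:: 2; 12; 16; 19];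
 [:: 2; 13; 14; 18];
 [:: 2; 13; 15; 17];
 [:: 2; 14; 17; 19];
 [:: 3; 4; 5; 15];
 [:: 3; 4; 6; 7];
 [:: 3; 4; 8; 12];
 [:: 3; 4; 9; 10];
 [:: 3; 4; 11; 16];
 [:: 3; 4; 13; 19];
 [:: 3; 4; 17; 18];
 [:: 3; 5; 7; 12];
 [:: 3; 5; 9; 18];
 [:: 3; 5; 11; 19];
 [:: 3; 5; 13; 16];
 [:: 3; 5; 14; 17];
 [:: 3; 6; 8; 11];
 [:: 3; 6; 9; 19];
 [:: 3; 6; 10; 17];
 [:: 3; 6; 12; 14];
 [:: 3; 6; 13; 15];
 [:: 3; 7; 8; 17];
 [:: 3; 7; 9; 15];
 [:: 3; 7; 10; 13];
 [:: 3; 7; 18; 19];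
 [:: 3; 8; 10; 14];
 [:: 3; 8; 13; 18];
 [:: 3; 8; 15; 16];
 [:: 3; 9; 12; 16];
 [:: 3; 9; 13; 14];
 [:: 3; 10; 11; 18];
 [:: 3; 10; 16; 19];
 [:: 3; 11; 12; 13];
 [:: 3; 11; 15; 17];
 [:: 3; 12; 17; 19];
 [:: 3; 14; 15; 19];
 [:: 3; 14; 16; 18];
 [:: 4; 5; 6; 16];
 [:: 4; 5; 7; 8];
 [:: 4; 5; 9; 13];
 [:: 4; 5; 10; 11];
 [:: 4; 5; 12; 17];
 [:: 4; 5; 18; 19];
 [:: 4; 6; 8; 13];
 [:: 4; 6; 10; 19];
 [:: 4; 6; 14; 17];
 [:: 4; 6; 15; 18];
 [:: 4; 7; 9; 12];
 [:: 4; 7; 11; 18];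
 [:: 4; 7; 13; 15];
 [:: 4; 7; 14; 16];
 [:: 4; 8; 9; 18];
 [:: 4; 8; 10; 16];
 [:: 4; 8; 11; 14];
 [:: 4; 9; 11; 15];
 [:: 4; 9; 14; 19];
 [:: 4; 9; 16; 17];
 [:: 4; 10; 13; 17];
 [:: 4; 10; 14; 15];
 [:: 4; 11; 12; 19];
 [:: 4; 12; 13; 14];
 [:: 4; 12; 16; 18];
 [:: 4; 15; 17; 19];
 [:: 5; 6; 7; 17];
 [:: 5; 6; 8; 9];
 [:: 5; 6; 10; 14];
 [:: 5; 6; 11; 12];
 [:: 5; 6; 13; 18];
 [:: 5; 7; 9; 14];
 [:: 5; 7; 15; 18];
 [:: 5; 7; 16; 19];
 [:: 5; 8; 10; 13];
 [:: 5; 8; 12; 19];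
 [:: 5; 8; 14; 16];
 [:: 5; 8; 15; 17];
 [:: 5; 9; 10; 19];
 [:: 5; 9; 11; 17];
 [:: 5; 9; 12; 15];
 [:: 5; 10; 12; 16];
 [:: 5; 10; 17; 18];
 [:: 5; 11; 14; 18];
 [:: 5; 11; 15; 16];
 [:: 5; 13; 14; 15];
 [:: 5; 13; 17; 19];
 [:: 6; 7; 8; 18];
 [:: 6; 7; 9; 10];
 [:: 6; 7; 11; 15];
 [:: 6; 7; 12; 13];
 [:: 6; 7; 14; 19];
 [:: 6; 8; 10; 15];
 [:: 6; 8; 16; 19];
 [:: 6; 9; 11; 14];
 [:: 6; 9; 15; 17];
 [:: 6; 9; 16; 18];
 [:: 6; 10; 12; 18];
 [:: 6; 10; 13; 16];
 [:: 6; 11; 13; 17];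
 [:: 6; 11; 18; 19];
 [:: 6; 12; 15; 19];
 [:: 6; 12; 16; 17];
 [:: 6; 14; 15; 16];
 [:: 7; 8; 9; 19];
 [:: 7; 8; 10; 11];
 [:: 7; 8; 12; 16];
 [:: 7; 8; 13; 14];
 [:: 7; 9; 11; 16];
 [:: 7; 10; 12; 15];
 [:: 7; 10; 16; 18];
 [:: 7; 10; 17; 19];
 [:: 7; 11; 13; 19];
 [:: 7; 11; 14; 17];
 [:: 7; 12; 14; 18];
 [:: 7; 13; 17; 18];
 [:: 7; 15; 16; 17];
 [:: 8; 9; 11; 12];
 [:: 8; 9; 13; 17];
 [:: 8; 9; 14; 15];
 [:: 8; 10; 12; 17];
 [:: 8; 11; 13; 16];
 [:: 8; 11; 17; 19];
 [:: 8; 12; 15; 18];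
 [:: 8; 13; 15; 19];
 [:: 8; 14; 18; 19];
 [:: 8; 16; 17; 18];
 [:: 9; 10; 12; 13];
 [:: 9; 10; 14; 18];
 [:: 9; 10; 15; 16];
 [:: 9; 11; 13; 18];
 [:: 9; 12; 14; 17];
 [:: 9; 13; 16; 19];
 [:: 9; 17; 18; 19];
 [:: 10; 11; 13; 14];
 [:: 10; 11; 15; 19];
 [:: 10; 11; 16; 17];
 [:: 10; 12; 14; 19];
 [:: 10; 13; 15; 18];
 [:: 11; 12; 14; 15];
 [:: 11; 12; 17; 18];
 [:: 11; 14; 16; 19];
 [:: 12; 13; 15; 16];
 [:: 12; 13; 18; 19];
 [:: 13; 14; 16; 17];
 [:: 14; 15; 17; 18];
 [:: 15; 16; 18; 19]].
Definition cols20 : seq (seq nat) := [:: [:: 9; 4; 5; 1; 6; 2; 0; 8; 3; 7; 2; 4; 6; 5; 1; 8; 3; 3; 5; 2; 8; 6; 9; 0; 6; 3; 0; 5; 1; 7; 9; 2; 9; 1; 0; 8; 8; 4; 7; 9; 4; 7; 8; 3; 9; 2; 7; 1; 0; 3; 5; 4; 4; 5; 2; 1; 6];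
 [:: 0; 7; 5; 2; 8; 3; 4; 1; 6; 9; 4; 5; 1; 6; 2; 8; 3; 2; 4; 6; 5; 1; 8; 3; 3; 5; 2; 8; 6; 9; 0; 6; 3; 0; 1; 7; 9; 9; 1; 0; 8; 8; 4; 7; 9; 4; 7; 3; 9; 2; 7; 1; 0; 5; 4; 5; 2];
 [:: 4; 3; 5; 0; 7; 8; 9; 2; 1; 0; 7; 5; 2; 8; 3; 1; 6; 9; 4; 5; 1; 6; 2; 8; 2; 4; 6; 1; 8; 3; 3; 5; 2; 8; 6; 9; 6; 3; 0; 1; 9; 9; 1; 0; 8; 4; 7; 4; 7; 3; 9; 7; 0; 5; 4; 5; 2];
 [:: 3; 6; 4; 9; 1; 8; 7; 5; 2; 4; 5; 0; 7; 8; 9; 2; 1; 0; 7; 5; 2; 8; 3; 1; 9; 4; 5; 1; 6; 2; 8; 2; 6; 1; 8; 3; 3; 5; 2; 8; 6; 6; 3; 0; 9; 9; 1; 0; 4; 7; 4; 3; 9; 7; 0; 4; 5];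
 [:: 6; 8; 2; 1; 5; 9; 3; 0; 4; 3; 4; 9; 1; 8; 7; 5; 2; 4; 5; 0; 7; 9; 2; 1; 0; 7; 5; 2; 8; 3; 1; 9; 4; 5; 1; 6; 8; 2; 6; 8; 3; 3; 2; 8; 6; 6; 3; 0; 9; 1; 0; 4; 7; 4; 9; 7; 5];
 [:: 9; 2; 0; 3; 8; 6; 1; 4; 5; 6; 8; 2; 1; 5; 3; 0; 4; 3; 4; 9; 1; 8; 7; 5; 4; 5; 7; 9; 2; 1; 0; 7; 5; 2; 8; 1; 9; 4; 5; 1; 6; 2; 8; 3; 3; 2; 8; 6; 6; 3; 0; 9; 0; 4; 7; 9; 7];
 [:: 8; 0; 5; 9; 1; 3; 2; 6; 7; 9; 2; 0; 3; 6; 1; 4; 5; 6; 8; 2; 1; 5; 3; 4; 3; 4; 9; 1; 8; 7; 4; 5; 7; 2; 1; 0; 7; 5; 2; 8; 9; 4; 5; 1; 6; 2; 8; 3; 8; 6; 3; 0; 9; 0; 4; 7; 9];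
 [:: 1; 5; 3; 9; 7; 6; 8; 0; 4; 8; 0; 5; 9; 3; 2; 6; 7; 9; 2; 0; 3; 6; 1; 4; 6; 8; 2; 1; 5; 4; 3; 4; 1; 8; 7; 4; 5; 2; 1; 0; 7; 5; 2; 8; 9; 4; 5; 1; 2; 3; 8; 6; 3; 0; 9; 7; 9];
 [:: 0; 7; 2; 4; 1; 8; 9; 6; 3; 1; 5; 3; 9; 7; 6; 8; 4; 8; 0; 5; 9; 3; 2; 6; 9; 0; 3; 6; 1; 4; 6; 8; 2; 1; 5; 3; 4; 1; 8; 7; 4; 5; 2; 0; 7; 5; 2; 4; 5; 1; 2; 3; 8; 0; 9; 7; 9];
 [:: 4; 5; 3; 1; 2; 0; 8; 9; 7; 0; 7; 2; 1; 8; 9; 6; 3; 1; 3; 9; 7; 6; 8; 4; 8; 0; 5; 9; 2; 6; 9; 0; 3; 6; 1; 4; 6; 8; 2; 1; 5; 3; 4; 8; 7; 4; 5; 7; 5; 2; 4; 5; 1; 2; 3; 0; 9];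
 [:: 7; 6; 8; 5; 1; 2; 4; 0; 9; 4; 5; 3; 1; 2; 0; 8; 9; 0; 7; 2; 1; 8; 9; 3; 1; 3; 9; 7; 6; 4; 8; 0; 9; 2; 6; 9; 0; 3; 6; 4; 6; 8; 1; 5; 3; 4; 8; 7; 5; 7; 5; 2; 4; 5; 1; 2; 3];
 [:: 9; 8; 1; 4; 0; 3; 7; 5; 2; 7; 6; 8; 5; 1; 2; 4; 0; 4; 5; 3; 1; 2; 0; 9; 0; 7; 2; 8; 9; 3; 1; 3; 9; 7; 6; 8; 9; 2; 6; 9; 0; 6; 4; 6; 8; 1; 5; 3; 4; 8; 5; 7; 5; 2; 4; 1; 3];
 [:: 9; 2; 7; 6; 4; 1; 8; 5; 3; 8; 1; 4; 0; 3; 7; 5; 2; 7; 6; 8; 5; 1; 2; 4; 0; 4; 5; 3; 1; 0; 9; 0; 2; 8; 9; 3; 1; 3; 9; 7; 8; 9; 2; 6; 9; 0; 6; 6; 8; 5; 3; 4; 5; 7; 2; 4; 1];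
 [:: 4; 7; 0; 9; 8; 3; 2; 5; 1; 9; 2; 7; 6; 1; 8; 5; 3; 8; 1; 4; 0; 3; 5; 2; 7; 6; 8; 5; 1; 2; 4; 4; 5; 3; 1; 0; 0; 2; 9; 3; 1; 9; 7; 8; 9; 6; 9; 0; 6; 6; 8; 5; 3; 4; 7; 2; 4];
 [:: 1; 8; 4; 7; 3; 9; 6; 5; 2; 4; 7; 0; 9; 8; 3; 2; 5; 9; 2; 7; 6; 1; 5; 3; 8; 1; 0; 3; 5; 2; 6; 8; 5; 1; 2; 4; 4; 5; 3; 1; 0; 0; 2; 9; 1; 9; 7; 8; 6; 9; 0; 6; 8; 3; 4; 7; 4];
 [:: 2; 9; 3; 5; 1; 0; 6; 8; 4; 1; 8; 4; 7; 3; 9; 6; 5; 4; 7; 0; 8; 3; 2; 5; 9; 2; 7; 6; 1; 5; 8; 1; 0; 3; 2; 6; 8; 5; 2; 4; 4; 5; 3; 1; 0; 2; 9; 1; 9; 7; 8; 9; 0; 6; 3; 7; 4];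
 [:: 6; 3; 0; 5; 2; 1; 7; 9; 4; 2; 9; 3; 5; 1; 0; 8; 4; 1; 8; 4; 7; 9; 6; 5; 4; 7; 8; 3; 2; 5; 9; 2; 7; 6; 1; 8; 1; 0; 3; 6; 8; 5; 2; 4; 4; 5; 3; 0; 2; 9; 1; 9; 8; 0; 6; 3; 7];
 [:: 4; 3; 5; 2; 8; 6; 9; 0; 7; 6; 3; 0; 5; 2; 1; 7; 9; 2; 9; 5; 1; 0; 8; 4; 1; 8; 4; 7; 9; 6; 4; 7; 8; 3; 5; 9; 2; 7; 6; 1; 1; 0; 3; 8; 5; 2; 4; 4; 5; 3; 0; 2; 9; 1; 8; 6; 3];
 [:: 7; 2; 4; 6; 5; 1; 8; 3; 9; 4; 3; 5; 2; 8; 6; 9; 0; 6; 3; 0; 5; 1; 7; 9; 2; 9; 5; 1; 0; 8; 1; 8; 4; 7; 9; 4; 7; 8; 3; 9; 2; 7; 6; 1; 0; 3; 5; 2; 4; 4; 5; 0; 2; 1; 8; 6; 3];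
 [:: 9; 4; 5; 1; 6; 2; 0; 8; 3; 7; 2; 4; 6; 5; 1; 8; 3; 3; 5; 2; 8; 6; 9; 0; 6; 3; 0; 5; 1; 7; 9; 2; 9; 1; 0; 8; 8; 4; 7; 9; 4; 7; 8; 3; 9; 2; 7; 1; 0; 3; 5; 4; 4; 5; 2; 1; 6]].
Definition bl26 : seq (seq nat) := [:: [:: 0; 1; 2; 23];
 [:: 0; 1; 3; 15];
 [:: 0; 1; 4; 20];
 [:: 0; 1; 5; 10];
 [:: 0; 1; 6; 8];
 [:: 0; 1; 7; 12];
 [:: 0; 1; 9; 24];
 [:: 0; 1; 11; 17];
 [:: 0; 1; 13; 18];
 [:: 0; 1; 14; 16];
 [:: 0; 1; 19; 21];
 [:: 0; 1; 22; 25];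
 [:: 0; 2; 3; 11];
 [:: 0; 2; 4; 19];
 [:: 0; 2; 5; 16];
 [:: 0; 2; 6; 18];
 [:: 0; 2; 7; 8];
 [:: 0; 2; 9; 15];
 [:: 0; 2; 10; 22];
 [:: 0; 2; 12; 13];
 [:: 0; 2; 14; 25];
 [:: 0; 2; 17; 24];
 [:: 0; 2; 20; 21];
 [:: 0; 3; 4; 5];
 [:: 0; 3; 6; 12];
 [:: 0; 3; 7; 21];
 [:: 0; 3; 8; 18];
 [:: 0; 3; 9; 23];
 [:: 0; 3; 10; 17];
 [:: 0; 3; 13; 22];
 [:: 0; 3; 14; 24];
 [:: 0; 3; 16; 20];
 [:: 0; 3; 19; 25];
 [:: 0; 4; 6; 14];
 [:: 0; 4; 7; 17];
 [:: 0; 4; 8; 15];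
 [:: 0; 4; 9; 25];
 [:: 0; 4; 10; 13];
 [:: 0; 4; 11; 22];
 [:: 0; 4; 12; 21];
 [:: 0; 4; 16; 24];
 [:: 0; 4; 18; 23];
 [:: 0; 5; 6; 24];
 [:: 0; 5; 7; 25];
 [:: 0; 5; 8; 12];
 [:: 0; 5; 9; 17];
 [:: 0; 5; 11; 18];
 [:: 0; 5; 13; 14];
 [:: 0; 5; 15; 23];
 [:: 0; 5; 19; 20];
 [:: 0; 5; 21; 22];
 [:: 0; 6; 7; 10];
 [:: 0; 6; 9; 22];
 [:: 0; 6; 11; 25];
 [:: 0; 6; 13; 21];
 [:: 0; 6; 15; 16];
 [:: 0; 6; 17; 19];
 [:: 0; 6; 20; 23];
 [:: 0; 7; 9; 11];
 [:: 0; 7; 13; 24];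
 [:: 0; 7; 14; 23];
 [:: 0; 7; 15; 20];
 [:: 0; 7; 16; 19];
 [:: 0; 7; 18; 22];
 [:: 0; 8; 9; 21];
 [:: 0; 8; 10; 14];
 [:: 0; 8; 11; 16];
 [:: 0; 8; 13; 19];
 [:: 0; 8; 17; 22];
 [:: 0; 8; 20; 24];
 [:: 0; 8; 23; 25];
 [:: 0; 9; 10; 20];
 [:: 0; 9; 12; 19];
 [:: 0; 9; 13; 16];
 [:: 0; 9; 14; 18];
 [:: 0; 10; 11; 24];
 [:: 0; 10; 12; 15];
 [:: 0; 10; 16; 25];
 [:: 0; 10; 18; 21];
 [:: 0; 10; 19; 23];
 [:: 0; 11; 12; 14];
 [:: 0; 11; 13; 20];
 [:: 0; 11; 15; 19];
 [:: 0; 11; 21; 23];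
 [:: 0; 12; 16; 18];
 [:: 0; 12; 17; 25];
 [:: 0; 12; 20; 22];
 [:: 0; 12; 23; 24];
 [:: 0; 13; 15; 25];
 [:: 0; 13; 17; 23];
 [:: 0; 14; 15; 21];
 [:: 0; 14; 17; 20];
 [:: 0; 14; 19; 22];
 [:: 0; 15; 17; 18];
 [:: 0; 15; 22; 24];
 [:: 0; 16; 17; 21];
 [:: 0; 16; 22; 23];
 [:: 0; 18; 19; 24];
 [:: 0; 18; 20; 25];
 [:: 0; 21; 24; 25];
 [:: 1; 2; 3; 24];
 [:: 1; 2; 4; 16];
 [:: 1; 2; 5; 21];
 [:: 1; 2; 6; 11];
 [:: 1; 2; 7; 9];
 [:: 1; 2; 8; 13];
 [:: 1; 2; 10; 25];
 [:: 1; 2; 12; 18];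
 [:: 1; 2; 14; 19];
 [:: 1; 2; 15; 17];
 [:: 1; 2; 20; 22];
 [:: 1; 3; 4; 12];
 [:: 1; 3; 5; 20];
 [:: 1; 3; 6; 17];
 [:: 1; 3; 7; 19];
 [:: 1; 3; 8; 9];
 [:: 1; 3; 10; 16];
 [:: 1; 3; 11; 23];
 [:: 1; 3; 13; 14];
 [:: 1; 3; 18; 25];
 [:: 1; 3; 21; 22];
 [:: 1; 4; 5; 6];
 [:: 1; 4; 7; 13];
 [:: 1; 4; 8; 22];
 [:: 1; 4; 9; 19];
 [:: 1; 4; 10; 24];
 [:: 1; 4; 11; 18];
 [:: 1; 4; 14; 23];
 [:: 1; 4; 15; 25];
 [:: 1; 4; 17; 21];
 [:: 1; 5; 7; 15];
 [:: 1; 5; 8; 18];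
 [:: 1; 5; 9; 16];
 [:: 1; 5; 11; 14];
 [:: 1; 5; 12; 23];
 [:: 1; 5; 13; 22];
 [:: 1; 5; 17; 25];
 [:: 1; 5; 19; 24];
 [:: 1; 6; 7; 25];
 [:: 1; 6; 9; 13];
 [:: 1; 6; 10; 18];
 [:: 1; 6; 12; 19];
 [:: 1; 6; 14; 15];
 [:: 1; 6; 16; 24];
 [:: 1; 6; 20; 21];
 [:: 1; 6; 22; 23];
 [:: 1; 7; 8; 11];
 [:: 1; 7; 10; 23];
 [:: 1; 7; 14; 22];
 [:: 1; 7; 16; 17];
 [:: 1; 7; 18; 20];
 [:: 1; 7; 21; 24];
 [:: 1; 8; 10; 12];
 [:: 1; 8; 14; 25];
 [:: 1; 8; 15; 24];
 [:: 1; 8; 16; 21];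
 [:: 1; 8; 17; 20];
 [:: 1; 8; 19; 23];
 [:: 1; 9; 10; 22];
 [:: 1; 9; 11; 15];
 [:: 1; 9; 12; 17];
 [:: 1; 9; 14; 20];
 [:: 1; 9; 18; 23];
 [:: 1; 9; 21; 25];
 [:: 1; 10; 11; 21];
 [:: 1; 10; 13; 20];
 [:: 1; 10; 14; 17];
 [:: 1; 10; 15; 19];
 [:: 1; 11; 12; 25];
 [:: 1; 11; 13; 16];
 [:: 1; 11; 19; 22];
 [:: 1; 11; 20; 24];
 [:: 1; 12; 13; 15];
 [:: 1; 12; 14; 21];
 [:: 1; 12; 16; 20];
 [:: 1; 12; 22; 24];
 [:: 1; 13; 17; 19];
 [:: 1; 13; 21; 23];
 [:: 1; 13; 24; 25];
 [:: 1; 14; 18; 24];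
 [:: 1; 15; 16; 22];
 [:: 1; 15; 18; 21];
 [:: 1; 15; 20; 23];
 [:: 1; 16; 18; 19];
 [:: 1; 16; 23; 25];
 [:: 1; 17; 18; 22];
 [:: 1; 17; 23; 24];
 [:: 1; 19; 20; 25];
 [:: 2; 3; 4; 25];
 [:: 2; 3; 5; 17];
 [:: 2; 3; 6; 22];
 [:: 2; 3; 7; 12];
 [:: 2; 3; 8; 10];
 [:: 2; 3; 9; 14];
 [:: 2; 3; 13; 19];
 [:: 2; 3; 15; 20];
 [:: 2; 3; 16; 18];
 [:: 2; 3; 21; 23];
 [:: 2; 4; 5; 13];
 [:: 2; 4; 6; 21];
 [:: 2; 4; 7; 18];
 [:: 2; 4; 8; 20];
 [:: 2; 4; 9; 10];
 [:: 2; 4; 11; 17];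
 [:: 2; 4; 12; 24];
 [:: 2; 4; 14; 15];
 [:: 2; 4; 22; 23];
 [:: 2; 5; 6; 7];
 [:: 2; 5; 8; 14];
 [:: 2; 5; 9; 23];
 [:: 2; 5; 10; 20];
 [:: 2; 5; 11; 25];
 [:: 2; 5; 12; 19];
 [:: 2; 5; 15; 24];
 [:: 2; 5; 18; 22];
 [:: 2; 6; 8; 16];
 [:: 2; 6; 9; 19];
 [:: 2; 6; 10; 17];
 [:: 2; 6; 12; 15];
 [:: 2; 6; 13; 24];
 [:: 2; 6; 14; 23];
 [:: 2; 6; 20; 25];
 [:: 2; 7; 10; 14];
 [:: 2; 7; 11; 19];
 [:: 2; 7; 13; 20];
 [:: 2; 7; 15; 16];
 [:: 2; 7; 17; 25];
 [:: 2; 7; 21; 22];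
 [:: 2; 7; 23; 24];
 [:: 2; 8; 9; 12];
 [:: 2; 8; 11; 24];
 [:: 2; 8; 15; 23];
 [:: 2; 8; 17; 18];
 [:: 2; 8; 19; 21];
 [:: 2; 8; 22; 25];
 [:: 2; 9; 11; 13];
 [:: 2; 9; 16; 25];
 [:: 2; 9; 17; 22];
 [:: 2; 9; 18; 21];
 [:: 2; 9; 20; 24];
 [:: 2; 10; 11; 23];
 [:: 2; 10; 12; 16];
 [:: 2; 10; 13; 18];
 [:: 2; 10; 15; 21];
 [:: 2; 10; 19; 24];
 [:: 2; 11; 12; 22];
 [:: 2; 11; 14; 21];
 [:: 2; 11; 15; 18];
 [:: 2; 11; 16; 20];
 [:: 2; 12; 14; 17];
 [:: 2; 12; 20; 23];
 [:: 2; 12; 21; 25];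
 [:: 2; 13; 14; 16];
 [:: 2; 13; 15; 22];
 [:: 2; 13; 17; 21];
 [:: 2; 13; 23; 25];
 [:: 2; 14; 18; 20];
 [:: 2; 14; 22; 24];
 [:: 2; 15; 19; 25];
 [:: 2; 16; 17; 23];
 [:: 2; 16; 19; 22];
 [:: 2; 16; 21; 24];
 [:: 2; 17; 19; 20];
 [:: 2; 18; 19; 23];
 [:: 2; 18; 24; 25];
 [:: 3; 4; 6; 18];
 [:: 3; 4; 7; 23];
 [:: 3; 4; 8; 13];
 [:: 3; 4; 9; 11];
 [:: 3; 4; 10; 15];
 [:: 3; 4; 14; 20];
 [:: 3; 4; 16; 21];
 [:: 3; 4; 17; 19];
 [:: 3; 4; 22; 24];
 [:: 3; 5; 6; 14];
 [:: 3; 5; 7; 22];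
 [:: 3; 5; 8; 19];
 [:: 3; 5; 9; 21];
 [:: 3; 5; 10; 11];
 [:: 3; 5; 12; 18];
 [:: 3; 5; 13; 25];
 [:: 3; 5; 15; 16];
 [:: 3; 5; 23; 24];
 [:: 3; 6; 7; 8];
 [:: 3; 6; 9; 15];
 [:: 3; 6; 10; 24];
 [:: 3; 6; 11; 21];
 [:: 3; 6; 13; 20];
 [:: 3; 6; 16; 25];
 [:: 3; 6; 19; 23];
 [:: 3; 7; 9; 17];
 [:: 3; 7; 10; 20];
 [:: 3; 7; 11; 18];
 [:: 3; 7; 13; 16];
 [:: 3; 7; 14; 25];
 [:: 3; 7; 15; 24];
 [:: 3; 8; 11; 15];
 [:: 3; 8; 12; 20];
 [:: 3; 8; 14; 21];
 [:: 3; 8; 16; 17];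
 [:: 3; 8; 22; 23];
 [:: 3; 8; 24; 25];
 [:: 3; 9; 10; 13];
 [:: 3; 9; 12; 25];
 [:: 3; 9; 16; 24];
 [:: 3; 9; 18; 19];
 [:: 3; 9; 20; 22];
 [:: 3; 10; 12; 14];
 [:: 3; 10; 18; 23];
 [:: 3; 10; 19; 22];
 [:: 3; 10; 21; 25];
 [:: 3; 11; 12; 24];
 [:: 3; 11; 13; 17];
 [:: 3; 11; 14; 19];
 [:: 3; 11; 16; 22];
 [:: 3; 11; 20; 25];
 [:: 3; 12; 13; 23];
 [:: 3; 12; 15; 22];
 [:: 3; 12; 16; 19];
 [:: 3; 12; 17; 21];
 [:: 3; 13; 15; 18];
 [:: 3; 13; 21; 24];
 [:: 3; 14; 15; 17];
 [:: 3; 14; 16; 23];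
 [:: 3; 14; 18; 22];
 [:: 3; 15; 19; 21];
 [:: 3; 15; 23; 25];
 [:: 3; 17; 18; 24];
 [:: 3; 17; 20; 23];
 [:: 3; 17; 22; 25];
 [:: 3; 18; 20; 21];
 [:: 3; 19; 20; 24];
 [:: 4; 5; 7; 19];
 [:: 4; 5; 8; 24];
 [:: 4; 5; 9; 14];
 [:: 4; 5; 10; 12];
 [:: 4; 5; 11; 16];
 [:: 4; 5; 15; 21];
 [:: 4; 5; 17; 22];
 [:: 4; 5; 18; 20];
 [:: 4; 5; 23; 25];
 [:: 4; 6; 7; 15];
 [:: 4; 6; 8; 23];
 [:: 4; 6; 9; 20];
 [:: 4; 6; 10; 22];
 [:: 4; 6; 11; 12];
 [:: 4; 6; 13; 19];
 [:: 4; 6; 16; 17];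
 [:: 4; 6; 24; 25];
 [:: 4; 7; 8; 9];
 [:: 4; 7; 10; 16];
 [:: 4; 7; 11; 25];
 [:: 4; 7; 12; 22];
 [:: 4; 7; 14; 21];
 [:: 4; 7; 20; 24];
 [:: 4; 8; 10; 18];
 [:: 4; 8; 11; 21];
 [:: 4; 8; 12; 19];
 [:: 4; 8; 14; 17];
 [:: 4; 8; 16; 25];
 [:: 4; 9; 12; 16];
 [:: 4; 9; 13; 21];
 [:: 4; 9; 15; 22];
 [:: 4; 9; 17; 18];
 [:: 4; 9; 23; 24];
 [:: 4; 10; 11; 14];
 [:: 4; 10; 17; 25];
 [:: 4; 10; 19; 20];
 [:: 4; 10; 21; 23];
 [:: 4; 11; 13; 15];
 [:: 4; 11; 19; 24];
 [:: 4; 11; 20; 23];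
 [:: 4; 12; 13; 25];
 [:: 4; 12; 14; 18];
 [:: 4; 12; 15; 20];
 [:: 4; 12; 17; 23];
 [:: 4; 13; 14; 24];
 [:: 4; 13; 16; 23];
 [:: 4; 13; 17; 20];
 [:: 4; 13; 18; 22];
 [:: 4; 14; 16; 19];
 [:: 4; 14; 22; 25];
 [:: 4; 15; 16; 18];
 [:: 4; 15; 17; 24];
 [:: 4; 15; 19; 23];
 [:: 4; 16; 20; 22];
 [:: 4; 18; 19; 25];
 [:: 4; 18; 21; 24];
 [:: 4; 19; 21; 22];
 [:: 4; 20; 21; 25];
 [:: 5; 6; 8; 20];
 [:: 5; 6; 9; 25];
 [:: 5; 6; 10; 15];
 [:: 5; 6; 11; 13];
 [:: 5; 6; 12; 17];
 [:: 5; 6; 16; 22];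
 [:: 5; 6; 18; 23];
 [:: 5; 6; 19; 21];
 [:: 5; 7; 8; 16];
 [:: 5; 7; 9; 24];
 [:: 5; 7; 10; 21];
 [:: 5; 7; 11; 23];
 [:: 5; 7; 12; 13];
 [:: 5; 7; 14; 20];
 [:: 5; 7; 17; 18];
 [:: 5; 8; 9; 10];
 [:: 5; 8; 11; 17];
 [:: 5; 8; 13; 23];
 [:: 5; 8; 15; 22];
 [:: 5; 8; 21; 25];
 [:: 5; 9; 11; 19];
 [:: 5; 9; 12; 22];
 [:: 5; 9; 13; 20];
 [:: 5; 9; 15; 18];
 [:: 5; 10; 13; 17];
 [:: 5; 10; 14; 22];
 [:: 5; 10; 16; 23];
 [:: 5; 10; 18; 19];
 [:: 5; 10; 24; 25];
 [:: 5; 11; 12; 15];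
 [:: 5; 11; 20; 21];
 [:: 5; 11; 22; 24];
 [:: 5; 12; 14; 16];
 [:: 5; 12; 20; 25];
 [:: 5; 12; 21; 24];
 [:: 5; 13; 15; 19];
 [:: 5; 13; 16; 21];
 [:: 5; 13; 18; 24];
 [:: 5; 14; 15; 25];
 [:: 5; 14; 17; 24];
 [:: 5; 14; 18; 21];
 [:: 5; 14; 19; 23];
 [:: 5; 15; 17; 20];
 [:: 5; 16; 17; 19];
 [:: 5; 16; 18; 25];
 [:: 5; 16; 20; 24];
 [:: 5; 17; 21; 23];
 [:: 5; 19; 22; 25];
 [:: 5; 20; 22; 23];
 [:: 6; 7; 9; 21];
 [:: 6; 7; 11; 16];
 [:: 6; 7; 12; 14];
 [:: 6; 7; 13; 18];
 [:: 6; 7; 17; 23];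
 [:: 6; 7; 19; 24];
 [:: 6; 7; 20; 22];
 [:: 6; 8; 9; 17];
 [:: 6; 8; 10; 25];
 [:: 6; 8; 11; 22];
 [:: 6; 8; 12; 24];
 [:: 6; 8; 13; 14];
 [:: 6; 8; 15; 21];
 [:: 6; 8; 18; 19];
 [:: 6; 9; 10; 11];
 [:: 6; 9; 12; 18];
 [:: 6; 9; 14; 24];
 [:: 6; 9; 16; 23];
 [:: 6; 10; 12; 20];
 [:: 6; 10; 13; 23];
 [:: 6; 10; 14; 21];
 [:: 6; 10; 16; 19];
 [:: 6; 11; 14; 18];
 [:: 6; 11; 15; 23];
 [:: 6; 11; 17; 24];
 [:: 6; 11; 19; 20];
 [:: 6; 12; 13; 16];
 [:: 6; 12; 21; 22];
 [:: 6; 12; 23; 25];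
 [:: 6; 13; 15; 17];
 [:: 6; 13; 22; 25];
 [:: 6; 14; 16; 20];
 [:: 6; 14; 17; 22];
 [:: 6; 14; 19; 25];
 [:: 6; 15; 18; 25];
 [:: 6; 15; 19; 22];
 [:: 6; 15; 20; 24];
 [:: 6; 16; 18; 21];
 [:: 6; 17; 18; 20];
 [:: 6; 17; 21; 25];
 [:: 6; 18; 22; 24];
 [:: 6; 21; 23; 24];
 [:: 7; 8; 10; 22];
 [:: 7; 8; 12; 17];
 [:: 7; 8; 13; 15];
 [:: 7; 8; 14; 19];
 [:: 7; 8; 18; 24];
 [:: 7; 8; 20; 25];
 [:: 7; 8; 21; 23];
 [:: 7; 9; 10; 18];
 [:: 7; 9; 12; 23];
 [:: 7; 9; 13; 25];
 [:: 7; 9; 14; 15];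
 [:: 7; 9; 16; 22];
 [:: 7; 9; 19; 20];
 [:: 7; 10; 11; 12];
 [:: 7; 10; 13; 19];
 [:: 7; 10; 15; 25];
 [:: 7; 10; 17; 24];
 [:: 7; 11; 13; 21];
 [:: 7; 11; 14; 24];
 [:: 7; 11; 15; 22];
 [:: 7; 11; 17; 20];
 [:: 7; 12; 15; 19];
 [:: 7; 12; 16; 24];
 [:: 7; 12; 18; 25];
 [:: 7; 12; 20; 21];
 [:: 7; 13; 14; 17];
 [:: 7; 13; 22; 23];
 [:: 7; 14; 16; 18];
 [:: 7; 15; 17; 21];
 [:: 7; 15; 18; 23];
 [:: 7; 16; 20; 23];
 [:: 7; 16; 21; 25];
 [:: 7; 17; 19; 22];
 [:: 7; 18; 19; 21];
 [:: 7; 19; 23; 25];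
 [:: 7; 22; 24; 25];
 [:: 8; 9; 11; 23];
 [:: 8; 9; 13; 18];
 [:: 8; 9; 14; 16];
 [:: 8; 9; 15; 20];
 [:: 8; 9; 19; 25];
 [:: 8; 9; 22; 24];
 [:: 8; 10; 11; 19];
 [:: 8; 10; 13; 24];
 [:: 8; 10; 15; 16];
 [:: 8; 10; 17; 23];
 [:: 8; 10; 20; 21];
 [:: 8; 11; 12; 13];
 [:: 8; 11; 14; 20];
 [:: 8; 11; 18; 25];
 [:: 8; 12; 14; 22];
 [:: 8; 12; 15; 25];
 [:: 8; 12; 16; 23];
 [:: 8; 12; 18; 21];
 [:: 8; 13; 16; 20];
 [:: 8; 13; 17; 25];
 [:: 8; 13; 21; 22];
 [:: 8; 14; 15; 18];
 [:: 8; 14; 23; 24];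
 [:: 8; 15; 17; 19];
 [:: 8; 16; 18; 22];
 [:: 8; 16; 19; 24];
 [:: 8; 17; 21; 24];
 [:: 8; 18; 20; 23];
 [:: 8; 19; 20; 22];
 [:: 9; 10; 12; 24];
 [:: 9; 10; 14; 19];
 [:: 9; 10; 15; 17];
 [:: 9; 10; 16; 21];
 [:: 9; 10; 23; 25];
 [:: 9; 11; 12; 20];
 [:: 9; 11; 14; 25];
 [:: 9; 11; 16; 17];
 [:: 9; 11; 18; 24];
 [:: 9; 11; 21; 22];
 [:: 9; 12; 13; 14];
 [:: 9; 12; 15; 21];
 [:: 9; 13; 15; 23];
 [:: 9; 13; 17; 24];
 [:: 9; 13; 19; 22];
 [:: 9; 14; 17; 21];
 [:: 9; 14; 22; 23];
 [:: 9; 15; 16; 19];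
 [:: 9; 15; 24; 25];
 [:: 9; 16; 18; 20];
 [:: 9; 17; 19; 23];
 [:: 9; 17; 20; 25];
 [:: 9; 18; 22; 25];
 [:: 9; 19; 21; 24];
 [:: 9; 20; 21; 23];
 [:: 10; 11; 13; 25];
 [:: 10; 11; 15; 20];
 [:: 10; 11; 16; 18];
 [:: 10; 11; 17; 22];
 [:: 10; 12; 13; 21];
 [:: 10; 12; 17; 18];
 [:: 10; 12; 19; 25];
 [:: 10; 12; 22; 23];
 [:: 10; 13; 14; 15];
 [:: 10; 13; 16; 22];
 [:: 10; 14; 16; 24];
 [:: 10; 14; 18; 25];
 [:: 10; 14; 20; 23];
 [:: 10; 15; 18; 22];
 [:: 10; 15; 23; 24];
 [:: 10; 16; 17; 20];
 [:: 10; 17; 19; 21];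
 [:: 10; 18; 20; 24];
 [:: 10; 20; 22; 25];
 [:: 10; 21; 22; 24];
 [:: 11; 12; 16; 21];
 [:: 11; 12; 17; 19];
 [:: 11; 12; 18; 23];
 [:: 11; 13; 14; 22];
 [:: 11; 13; 18; 19];
 [:: 11; 13; 23; 24];
 [:: 11; 14; 15; 16];
 [:: 11; 14; 17; 23];
 [:: 11; 15; 17; 25];
 [:: 11; 15; 21; 24];
 [:: 11; 16; 19; 23];
 [:: 11; 16; 24; 25];
 [:: 11; 17; 18; 21];
 [:: 11; 18; 20; 22];
 [:: 11; 19; 21; 25];
 [:: 11; 22; 23; 25];
 [:: 12; 13; 17; 22];
 [:: 12; 13; 18; 20];
 [:: 12; 13; 19; 24];
 [:: 12; 14; 15; 23];
 [:: 12; 14; 19; 20];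
 [:: 12; 14; 24; 25];
 [:: 12; 15; 16; 17];
 [:: 12; 15; 18; 24];
 [:: 12; 16; 22; 25];
 [:: 12; 17; 20; 24];
 [:: 12; 18; 19; 22];
 [:: 12; 19; 21; 23];
 [:: 13; 14; 18; 23];
 [:: 13; 14; 19; 21];
 [:: 13; 14; 20; 25];
 [:: 13; 15; 16; 24];
 [:: 13; 15; 20; 21];
 [:: 13; 16; 17; 18];
 [:: 13; 16; 19; 25];
 [:: 13; 18; 21; 25];
 [:: 13; 19; 20; 23];
 [:: 13; 20; 22; 24];
 [:: 14; 15; 19; 24];
 [:: 14; 15; 20; 22];
 [:: 14; 16; 17; 25];
 [:: 14; 16; 21; 22];
 [:: 14; 17; 18; 19];
 [:: 14; 20; 21; 24];
 [:: 14; 21; 23; 25];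
 [:: 15; 16; 20; 25];
 [:: 15; 16; 21; 23];
 [:: 15; 17; 22; 23];
 [:: 15; 18; 19; 20];
 [:: 15; 21; 22; 25];
 [:: 16; 17; 22; 24];
 [:: 16; 18; 23; 24];
 [:: 16; 19; 20; 21];
 [:: 17; 18; 23; 25];
 [:: 17; 19; 24; 25];
 [:: 17; 20; 21; 22];
 [:: 18; 21; 22; 23];
 [:: 19; 22; 23; 24];
 [:: 20; 23; 24; 25]].
Definition cols26 : seq (seq nat) := [:: [:: 4; 8; 7; 11; 1; 0; 2; 6; 9; 3; 5; 10; 5; 11; 6; 7; 9; 12; 1; 10; 8; 0; 2; 0; 3; 11; 12; 10; 7; 4; 6; 1; 9; 2; 1; 4; 3; 12; 8; 9; 10; 6; 5; 4; 2; 8; 10; 1; 9; 3; 12; 6; 9; 12; 8; 0; 10; 11; 7; 3; 5; 10; 12; 2; 6; 10; 11; 7; 5; 8; 0; 4; 1; 5; 11; 9; 5; 2; 0; 8; 4; 0; 2; 3; 8; 11; 6; 12; 6; 2; 7; 9; 0; 3; 11; 4; 7; 4; 5; 1];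
 [:: 10; 8; 9; 3; 4; 12; 0; 2; 11; 6; 5; 1; 4; 8; 7; 11; 1; 0; 2; 6; 9; 3; 5; 5; 11; 6; 7; 9; 12; 1; 10; 0; 2; 0; 3; 11; 12; 10; 7; 4; 6; 1; 2; 1; 4; 12; 8; 9; 10; 6; 5; 2; 8; 10; 1; 9; 3; 12; 6; 9; 8; 0; 10; 11; 7; 3; 5; 10; 12; 2; 6; 10; 11; 7; 5; 8; 4; 1; 5; 11; 9; 5; 0; 8; 4; 0; 2; 3; 8; 6; 12; 2; 7; 9; 0; 3; 11; 4; 7; 4];
 [:: 1; 2; 0; 6; 10; 5; 3; 8; 9; 12; 11; 4; 10; 8; 9; 3; 4; 12; 0; 2; 11; 6; 5; 4; 8; 7; 11; 1; 0; 6; 9; 3; 5; 5; 11; 6; 7; 9; 12; 1; 10; 2; 0; 3; 11; 12; 10; 7; 4; 1; 2; 1; 4; 12; 8; 9; 6; 2; 8; 10; 1; 9; 3; 12; 6; 9; 8; 0; 10; 11; 7; 5; 10; 12; 2; 6; 10; 11; 7; 5; 4; 1; 5; 11; 5; 0; 8; 4; 0; 2; 3; 8; 6; 2; 7; 9; 0; 3; 4; 7];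
 [:: 12; 0; 4; 10; 6; 9; 11; 5; 8; 3; 2; 7; 1; 2; 0; 6; 10; 5; 3; 8; 9; 11; 4; 10; 8; 9; 3; 4; 12; 2; 11; 6; 5; 8; 7; 11; 1; 0; 6; 9; 3; 5; 5; 11; 6; 7; 9; 12; 1; 10; 2; 0; 3; 11; 12; 7; 4; 1; 2; 1; 4; 12; 8; 9; 2; 8; 10; 1; 3; 12; 6; 9; 8; 0; 10; 7; 10; 12; 2; 6; 10; 11; 7; 5; 4; 1; 5; 11; 5; 0; 4; 0; 2; 8; 6; 7; 9; 0; 3; 4];
 [:: 7; 11; 10; 1; 4; 8; 12; 9; 2; 5; 6; 0; 12; 0; 4; 10; 6; 9; 11; 5; 8; 3; 2; 1; 2; 0; 6; 10; 5; 3; 8; 9; 4; 8; 9; 3; 4; 12; 2; 11; 6; 5; 8; 7; 11; 1; 0; 6; 9; 3; 5; 5; 11; 6; 7; 9; 12; 10; 2; 0; 3; 11; 12; 7; 1; 2; 1; 4; 12; 9; 2; 8; 10; 1; 3; 6; 8; 0; 10; 7; 10; 12; 6; 10; 11; 7; 4; 1; 5; 11; 5; 0; 4; 0; 2; 8; 7; 9; 3; 4];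
 [:: 12; 3; 1; 5; 2; 11; 9; 8; 6; 0; 7; 4; 7; 11; 10; 1; 4; 8; 9; 2; 5; 6; 0; 12; 0; 4; 10; 6; 9; 11; 5; 8; 2; 2; 0; 6; 10; 5; 3; 8; 9; 4; 8; 9; 3; 4; 12; 2; 11; 6; 5; 8; 7; 11; 1; 0; 6; 9; 3; 5; 11; 6; 7; 9; 12; 10; 0; 3; 12; 7; 1; 2; 1; 4; 12; 2; 8; 10; 1; 3; 6; 0; 10; 7; 10; 12; 10; 11; 7; 4; 1; 5; 11; 5; 4; 0; 2; 8; 9; 3];
 [:: 2; 6; 11; 8; 5; 7; 1; 3; 10; 4; 0; 9; 12; 3; 1; 5; 11; 9; 8; 6; 0; 7; 4; 7; 11; 10; 1; 4; 8; 9; 2; 5; 0; 12; 0; 4; 10; 6; 9; 5; 8; 2; 2; 0; 6; 10; 5; 3; 9; 4; 8; 9; 3; 4; 12; 2; 11; 6; 8; 11; 1; 0; 6; 9; 3; 5; 11; 6; 7; 9; 12; 10; 0; 3; 12; 7; 2; 1; 4; 12; 2; 8; 10; 1; 6; 0; 10; 7; 12; 10; 11; 7; 1; 5; 11; 5; 4; 2; 8; 3];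
 [:: 3; 5; 0; 8; 4; 9; 11; 10; 12; 7; 1; 2; 2; 6; 11; 8; 5; 7; 1; 10; 4; 0; 9; 12; 3; 1; 11; 9; 8; 6; 0; 7; 4; 7; 11; 10; 1; 4; 8; 9; 2; 5; 12; 0; 4; 10; 6; 9; 5; 2; 2; 0; 6; 10; 5; 3; 9; 8; 3; 4; 12; 2; 11; 6; 8; 11; 1; 0; 6; 9; 3; 5; 6; 7; 9; 12; 10; 0; 3; 12; 7; 2; 1; 4; 12; 2; 8; 10; 1; 6; 0; 7; 10; 11; 5; 11; 5; 4; 8; 3];
 [:: 4; 5; 0; 2; 6; 9; 7; 12; 10; 11; 8; 3; 3; 5; 0; 8; 9; 11; 10; 12; 7; 1; 2; 2; 6; 11; 8; 7; 1; 10; 4; 0; 9; 12; 3; 1; 11; 9; 8; 6; 7; 4; 7; 11; 10; 1; 4; 8; 9; 5; 12; 0; 4; 10; 9; 5; 2; 2; 0; 6; 10; 5; 3; 9; 8; 3; 4; 12; 2; 11; 6; 8; 11; 1; 0; 6; 3; 5; 6; 9; 12; 10; 0; 3; 7; 2; 1; 4; 12; 2; 8; 1; 6; 0; 7; 10; 11; 5; 5; 4];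
 [:: 3; 10; 9; 4; 5; 2; 0; 11; 6; 7; 1; 8; 4; 5; 0; 2; 6; 9; 7; 12; 10; 11; 8; 3; 5; 0; 8; 9; 11; 12; 7; 1; 2; 2; 6; 11; 8; 7; 1; 10; 4; 0; 12; 3; 1; 11; 9; 8; 6; 7; 7; 11; 10; 1; 4; 8; 9; 12; 0; 4; 10; 9; 5; 2; 6; 10; 5; 3; 9; 8; 3; 4; 12; 2; 6; 8; 11; 1; 0; 3; 5; 6; 9; 12; 10; 0; 3; 2; 4; 12; 2; 1; 6; 0; 7; 10; 11; 5; 5; 4];
 [:: 4; 8; 12; 1; 7; 10; 2; 3; 6; 0; 11; 5; 3; 10; 9; 5; 2; 0; 11; 6; 7; 1; 8; 4; 5; 0; 2; 6; 9; 7; 12; 10; 11; 3; 5; 0; 8; 9; 11; 7; 1; 2; 2; 6; 11; 8; 7; 10; 4; 0; 12; 3; 1; 11; 9; 8; 6; 7; 11; 10; 1; 4; 8; 9; 12; 0; 4; 10; 9; 5; 2; 6; 5; 3; 9; 8; 3; 4; 12; 6; 8; 11; 1; 0; 5; 9; 12; 10; 0; 3; 2; 4; 12; 2; 1; 6; 7; 10; 5; 4];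
 [:: 0; 3; 2; 10; 7; 11; 9; 6; 8; 12; 4; 5; 4; 8; 12; 1; 7; 10; 2; 3; 6; 11; 5; 10; 9; 5; 2; 0; 11; 6; 7; 1; 8; 4; 5; 0; 2; 6; 9; 7; 12; 10; 11; 3; 5; 0; 8; 9; 11; 7; 1; 2; 6; 11; 8; 7; 4; 0; 12; 3; 1; 11; 9; 8; 6; 10; 1; 4; 8; 9; 12; 0; 4; 10; 5; 2; 6; 5; 3; 9; 8; 3; 4; 12; 11; 1; 0; 5; 9; 10; 0; 3; 2; 12; 2; 1; 6; 7; 10; 4];
 [:: 7; 3; 9; 11; 0; 5; 6; 8; 2; 1; 10; 4; 0; 3; 2; 10; 11; 9; 6; 8; 12; 4; 5; 4; 8; 12; 1; 7; 10; 2; 6; 11; 5; 10; 5; 2; 0; 11; 6; 7; 1; 8; 4; 5; 0; 2; 6; 9; 7; 12; 10; 3; 5; 8; 9; 11; 7; 1; 2; 6; 11; 8; 7; 4; 0; 12; 3; 1; 11; 9; 8; 6; 10; 1; 4; 8; 9; 12; 0; 4; 10; 2; 5; 3; 9; 3; 4; 12; 11; 1; 0; 5; 9; 10; 0; 3; 12; 2; 6; 7];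
 [:: 1; 6; 5; 2; 9; 7; 0; 8; 4; 3; 10; 12; 7; 3; 9; 11; 0; 5; 6; 8; 2; 10; 4; 0; 3; 2; 10; 11; 9; 8; 12; 4; 5; 4; 8; 12; 1; 7; 10; 2; 6; 11; 10; 5; 0; 11; 6; 7; 1; 8; 4; 5; 0; 2; 6; 7; 12; 10; 3; 5; 8; 9; 11; 1; 2; 6; 11; 8; 7; 4; 12; 3; 1; 11; 9; 6; 10; 1; 8; 9; 12; 0; 4; 10; 2; 5; 9; 3; 4; 12; 11; 1; 0; 5; 9; 0; 3; 2; 6; 7];
 [:: 10; 4; 5; 8; 11; 1; 6; 9; 12; 0; 3; 2; 1; 6; 5; 2; 9; 7; 0; 8; 4; 3; 12; 7; 3; 9; 11; 0; 5; 6; 8; 2; 10; 0; 3; 2; 10; 11; 9; 8; 12; 4; 4; 12; 1; 7; 10; 2; 6; 11; 10; 5; 0; 6; 7; 1; 8; 4; 5; 0; 2; 6; 7; 12; 10; 3; 5; 8; 9; 11; 2; 11; 8; 7; 4; 12; 3; 1; 11; 6; 10; 1; 8; 9; 0; 4; 10; 2; 5; 9; 3; 4; 12; 11; 1; 5; 9; 0; 6; 7];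
 [:: 4; 0; 2; 11; 6; 10; 3; 8; 9; 12; 5; 7; 10; 5; 8; 11; 1; 6; 9; 12; 0; 3; 2; 1; 6; 5; 2; 9; 7; 8; 4; 3; 12; 7; 3; 9; 11; 0; 5; 6; 8; 2; 10; 0; 3; 10; 11; 9; 8; 12; 4; 4; 12; 1; 7; 10; 2; 6; 10; 5; 0; 7; 1; 8; 4; 5; 0; 2; 6; 7; 12; 3; 5; 8; 9; 11; 2; 11; 8; 7; 4; 12; 1; 11; 6; 10; 1; 9; 0; 4; 10; 2; 5; 3; 4; 11; 1; 9; 0; 6];
 [:: 9; 5; 12; 10; 2; 7; 0; 8; 4; 1; 11; 6; 4; 0; 2; 11; 6; 10; 3; 8; 12; 5; 7; 10; 8; 11; 1; 6; 9; 12; 0; 3; 2; 1; 6; 5; 2; 9; 7; 8; 4; 3; 7; 3; 9; 11; 0; 5; 6; 8; 2; 0; 3; 10; 11; 9; 8; 12; 4; 4; 12; 1; 7; 10; 6; 10; 5; 0; 1; 8; 4; 5; 2; 6; 7; 12; 3; 5; 9; 11; 2; 11; 8; 7; 12; 1; 11; 6; 10; 9; 0; 4; 10; 2; 5; 3; 4; 1; 9; 0];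
 [:: 4; 7; 1; 5; 11; 12; 8; 6; 9; 10; 2; 3; 9; 5; 12; 10; 2; 7; 0; 8; 1; 11; 6; 4; 0; 2; 11; 6; 10; 3; 8; 12; 5; 10; 8; 11; 6; 9; 12; 0; 3; 2; 1; 6; 2; 9; 7; 8; 4; 3; 7; 3; 9; 0; 5; 6; 8; 2; 0; 3; 10; 11; 9; 8; 4; 4; 12; 1; 7; 10; 6; 10; 5; 0; 1; 4; 5; 2; 6; 7; 12; 3; 5; 9; 11; 2; 11; 8; 7; 12; 1; 11; 10; 0; 4; 5; 4; 1; 9; 0];
 [:: 6; 10; 11; 2; 7; 4; 5; 12; 8; 0; 1; 9; 4; 7; 1; 5; 11; 12; 8; 9; 10; 2; 3; 9; 5; 12; 2; 7; 0; 8; 1; 11; 6; 4; 0; 2; 6; 10; 3; 8; 12; 5; 10; 8; 11; 6; 9; 12; 0; 3; 1; 6; 2; 9; 8; 4; 3; 7; 3; 9; 0; 5; 6; 8; 2; 0; 3; 10; 11; 9; 8; 4; 12; 1; 7; 10; 6; 10; 0; 1; 4; 5; 2; 6; 7; 3; 5; 9; 11; 2; 11; 7; 12; 1; 11; 10; 4; 5; 4; 0];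
 [:: 9; 7; 6; 0; 3; 5; 10; 12; 1; 2; 11; 4; 6; 10; 11; 2; 7; 4; 5; 12; 8; 0; 1; 4; 1; 5; 11; 12; 8; 9; 10; 2; 3; 9; 5; 12; 2; 7; 0; 8; 1; 11; 4; 0; 2; 6; 10; 3; 8; 12; 5; 10; 8; 11; 6; 9; 12; 3; 1; 6; 2; 9; 8; 4; 7; 3; 9; 0; 6; 8; 2; 0; 3; 11; 9; 8; 4; 1; 7; 10; 6; 10; 0; 4; 5; 6; 7; 3; 5; 9; 11; 2; 11; 7; 12; 1; 10; 4; 5; 0];
 [:: 6; 1; 9; 12; 3; 8; 2; 0; 10; 7; 11; 5; 9; 7; 0; 3; 5; 10; 12; 1; 2; 11; 4; 6; 10; 11; 2; 7; 4; 5; 12; 8; 0; 4; 1; 5; 11; 12; 8; 10; 2; 3; 9; 5; 12; 2; 7; 0; 8; 1; 11; 4; 0; 2; 6; 10; 3; 8; 5; 10; 8; 11; 6; 9; 12; 1; 6; 2; 9; 4; 7; 3; 9; 0; 6; 8; 3; 11; 9; 8; 4; 1; 7; 10; 6; 0; 4; 5; 6; 3; 5; 9; 11; 2; 7; 12; 1; 10; 4; 0];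
 [:: 5; 4; 2; 8; 11; 10; 1; 9; 6; 3; 12; 0; 6; 1; 9; 12; 3; 8; 2; 0; 10; 7; 11; 9; 7; 0; 3; 5; 10; 12; 1; 2; 11; 6; 10; 11; 7; 4; 5; 12; 8; 0; 4; 1; 5; 11; 12; 10; 2; 3; 9; 5; 12; 2; 7; 0; 8; 1; 4; 0; 2; 6; 3; 8; 5; 10; 8; 11; 6; 9; 12; 6; 2; 9; 4; 7; 3; 9; 0; 6; 8; 3; 11; 8; 4; 1; 7; 10; 0; 4; 5; 6; 5; 9; 11; 2; 7; 1; 10; 4];
 [:: 0; 2; 1; 4; 3; 12; 8; 9; 10; 6; 11; 7; 5; 4; 2; 8; 11; 10; 1; 9; 6; 3; 12; 6; 1; 9; 12; 3; 8; 0; 10; 7; 11; 9; 7; 0; 3; 5; 10; 12; 2; 11; 6; 10; 11; 7; 5; 12; 8; 0; 4; 1; 5; 11; 12; 10; 2; 9; 5; 2; 7; 0; 8; 1; 4; 0; 2; 6; 3; 5; 10; 8; 11; 6; 12; 6; 2; 9; 4; 7; 3; 9; 0; 6; 8; 3; 11; 8; 4; 1; 7; 0; 4; 5; 5; 9; 2; 1; 10; 4];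
 [:: 0; 3; 11; 12; 10; 7; 5; 4; 6; 8; 1; 9; 2; 1; 4; 3; 12; 8; 9; 10; 6; 11; 7; 5; 4; 2; 8; 11; 10; 1; 9; 6; 3; 12; 6; 1; 9; 12; 8; 0; 10; 7; 11; 9; 7; 0; 3; 5; 10; 12; 2; 6; 10; 11; 7; 5; 8; 0; 4; 1; 5; 11; 12; 2; 9; 5; 2; 0; 8; 1; 4; 0; 2; 6; 3; 10; 8; 11; 6; 12; 6; 2; 9; 7; 3; 9; 0; 8; 3; 11; 4; 7; 0; 4; 5; 5; 2; 1; 10; 4];
 [:: 5; 11; 6; 7; 9; 12; 1; 10; 8; 0; 2; 4; 0; 3; 11; 12; 10; 7; 4; 6; 8; 1; 9; 2; 1; 4; 3; 12; 8; 9; 10; 6; 7; 5; 4; 2; 8; 11; 10; 1; 9; 3; 12; 6; 1; 9; 12; 8; 0; 10; 11; 7; 0; 3; 5; 10; 12; 2; 6; 10; 11; 7; 5; 8; 0; 4; 1; 5; 11; 2; 9; 5; 2; 0; 8; 4; 0; 2; 6; 3; 8; 11; 6; 12; 6; 2; 9; 7; 3; 9; 0; 3; 11; 4; 7; 4; 5; 5; 1; 10];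
 [:: 4; 8; 7; 11; 1; 0; 2; 6; 9; 3; 5; 10; 5; 11; 6; 7; 9; 12; 1; 10; 8; 0; 2; 0; 3; 11; 12; 10; 7; 4; 6; 1; 9; 2; 1; 4; 3; 12; 8; 9; 10; 6; 5; 4; 2; 8; 10; 1; 9; 3; 12; 6; 9; 12; 8; 0; 10; 11; 7; 3; 5; 10; 12; 2; 6; 10; 11; 7; 5; 8; 0; 4; 1; 5; 11; 9; 5; 2; 0; 8; 4; 0; 2; 3; 8; 11; 6; 12; 6; 2; 7; 9; 0; 3; 11; 4; 7; 4; 5; 1]].
Definition bl32 : seq (seq nat) := [:: [:: 0; 1; 2; 3];
 [:: 0; 1; 4; 5];
 [:: 0; 1; 6; 8];
 [:: 0; 1; 7; 9];
 [:: 0; 1; 10; 20];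
 [:: 0; 1; 11; 21];
 [:: 0; 1; 12; 13];
 [:: 0; 1; 14; 29];
 [:: 0; 1; 15; 28];
 [:: 0; 1; 16; 17];
 [:: 0; 1; 18; 24];
 [:: 0; 1; 19; 25];
 [:: 0; 1; 22; 30];
 [:: 0; 1; 23; 31];
 [:: 0; 1; 26; 27];
 [:: 0; 2; 4; 31];
 [:: 0; 2; 5; 7];
 [:: 0; 2; 6; 29];
 [:: 0; 2; 8; 10];
 [:: 0; 2; 9; 11];
 [:: 0; 2; 12; 14];
 [:: 0; 2; 13; 25];
 [:: 0; 2; 15; 27];
 [:: 0; 2; 16; 20];
 [:: 0; 2; 17; 24];
 [:: 0; 2; 18; 22];
 [:: 0; 2; 19; 26];
 [:: 0; 2; 21; 23];
 [:: 0; 2; 28; 30];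
 [:: 0; 3; 4; 8];
 [:: 0; 3; 5; 6];
 [:: 0; 3; 7; 11];
 [:: 0; 3; 9; 30];
 [:: 0; 3; 10; 29];
 [:: 0; 3; 12; 21];
 [:: 0; 3; 13; 28];
 [:: 0; 3; 14; 31];
 [:: 0; 3; 15; 22];
 [:: 0; 3; 16; 19];
 [:: 0; 3; 17; 23];
 [:: 0; 3; 18; 20];
 [:: 0; 3; 24; 27];
 [:: 0; 3; 25; 26];
 [:: 0; 4; 6; 27];
 [:: 0; 4; 7; 12];
 [:: 0; 4; 9; 25];
 [:: 0; 4; 10; 14];
 [:: 0; 4; 11; 15];
 [:: 0; 4; 13; 29];
 [:: 0; 4; 16; 18];
 [:: 0; 4; 17; 21];
 [:: 0; 4; 19; 23];
 [:: 0; 4; 20; 22];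
 [:: 0; 4; 24; 28];
 [:: 0; 4; 26; 30];
 [:: 0; 5; 8; 13];
 [:: 0; 5; 9; 29];
 [:: 0; 5; 10; 16];
 [:: 0; 5; 11; 19];
 [:: 0; 5; 12; 24];
 [:: 0; 5; 14; 22];
 [:: 0; 5; 15; 21];
 [:: 0; 5; 17; 20];
 [:: 0; 5; 18; 30];
 [:: 0; 5; 23; 27];
 [:: 0; 5; 25; 31];
 [:: 0; 5; 26; 28];
 [:: 0; 6; 7; 14];
 [:: 0; 6; 9; 15];
 [:: 0; 6; 10; 21];
 [:: 0; 6; 11; 16];
 [:: 0; 6; 12; 19];
 [:: 0; 6; 13; 22];
 [:: 0; 6; 17; 18];
 [:: 0; 6; 20; 23];
 [:: 0; 6; 24; 30];
 [:: 0; 6; 25; 28];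
 [:: 0; 6; 26; 31];
 [:: 0; 7; 8; 25];
 [:: 0; 7; 10; 13];
 [:: 0; 7; 15; 30];
 [:: 0; 7; 16; 23];
 [:: 0; 7; 17; 26];
 [:: 0; 7; 18; 21];
 [:: 0; 7; 19; 20];
 [:: 0; 7; 22; 29];
 [:: 0; 7; 24; 31];
 [:: 0; 7; 27; 28];
 [:: 0; 8; 9; 14];
 [:: 0; 8; 11; 12];
 [:: 0; 8; 15; 17];
 [:: 0; 8; 16; 24];
 [:: 0; 8; 18; 28];
 [:: 0; 8; 19; 27];
 [:: 0; 8; 20; 26];
 [:: 0; 8; 21; 29];
 [:: 0; 8; 22; 23];
 [:: 0; 8; 30; 31];
 [:: 0; 9; 10; 23];
 [:: 0; 9; 12; 20];
 [:: 0; 9; 13; 16];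
 [:: 0; 9; 17; 19];
 [:: 0; 9; 18; 27];
 [:: 0; 9; 21; 28];
 [:: 0; 9; 22; 31];
 [:: 0; 9; 24; 26];
 [:: 0; 10; 11; 30];
 [:: 0; 10; 12; 31];
 [:: 0; 10; 15; 26];
 [:: 0; 10; 17; 27];
 [:: 0; 10; 18; 19];
 [:: 0; 10; 22; 28];
 [:: 0; 10; 24; 25];
 [:: 0; 11; 13; 27];
 [:: 0; 11; 14; 24];
 [:: 0; 11; 17; 22];
 [:: 0; 11; 18; 25];
 [:: 0; 11; 20; 31];
 [:: 0; 11; 23; 28];
 [:: 0; 11; 26; 29];
 [:: 0; 12; 15; 25];
 [:: 0; 12; 16; 28];
 [:: 0; 12; 17; 29];
 [:: 0; 12; 18; 23];
 [:: 0; 12; 22; 26];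
 [:: 0; 12; 27; 30];
 [:: 0; 13; 14; 17];
 [:: 0; 13; 15; 20];
 [:: 0; 13; 18; 31];
 [:: 0; 13; 19; 30];
 [:: 0; 13; 21; 24];
 [:: 0; 13; 23; 26];
 [:: 0; 14; 15; 19];
 [:: 0; 14; 16; 30];
 [:: 0; 14; 18; 26];
 [:: 0; 14; 20; 28];
 [:: 0; 14; 21; 27];
 [:: 0; 14; 23; 25];
 [:: 0; 15; 16; 31];
 [:: 0; 15; 18; 29];
 [:: 0; 15; 23; 24];
 [:: 0; 16; 21; 26];
 [:: 0; 16; 22; 27];
 [:: 0; 16; 25; 29];
 [:: 0; 17; 25; 30];
 [:: 0; 17; 28; 31];
 [:: 0; 19; 21; 31];
 [:: 0; 19; 22; 24];
 [:: 0; 19; 28; 29];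
 [:: 0; 20; 21; 30];
 [:: 0; 20; 24; 29];
 [:: 0; 20; 25; 27];
 [:: 0; 21; 22; 25];
 [:: 0; 23; 29; 30];
 [:: 0; 27; 29; 31];
 [:: 1; 2; 4; 7];
 [:: 1; 2; 5; 9];
 [:: 1; 2; 6; 10];
 [:: 1; 2; 8; 31];
 [:: 1; 2; 11; 28];
 [:: 1; 2; 12; 29];
 [:: 1; 2; 13; 20];
 [:: 1; 2; 14; 23];
 [:: 1; 2; 15; 30];
 [:: 1; 2; 16; 22];
 [:: 1; 2; 17; 18];
 [:: 1; 2; 19; 21];
 [:: 1; 2; 24; 27];
 [:: 1; 2; 25; 26];
 [:: 1; 3; 4; 6];
 [:: 1; 3; 5; 30];
 [:: 1; 3; 7; 28];
 [:: 1; 3; 8; 10];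
 [:: 1; 3; 9; 11];
 [:: 1; 3; 12; 24];
 [:: 1; 3; 13; 15];
 [:: 1; 3; 14; 26];
 [:: 1; 3; 16; 25];
 [:: 1; 3; 17; 21];
 [:: 1; 3; 18; 27];
 [:: 1; 3; 19; 23];
 [:: 1; 3; 20; 22];
 [:: 1; 3; 29; 31];
 [:: 1; 4; 8; 28];
 [:: 1; 4; 9; 12];
 [:: 1; 4; 10; 18];
 [:: 1; 4; 11; 17];
 [:: 1; 4; 13; 25];
 [:: 1; 4; 14; 20];
 [:: 1; 4; 15; 23];
 [:: 1; 4; 16; 21];
 [:: 1; 4; 19; 31];
 [:: 1; 4; 22; 26];
 [:: 1; 4; 24; 30];
 [:: 1; 4; 27; 29];
 [:: 1; 5; 6; 13];
 [:: 1; 5; 7; 26];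
 [:: 1; 5; 8; 24];
 [:: 1; 5; 10; 14];
 [:: 1; 5; 11; 15];
 [:: 1; 5; 12; 28];
 [:: 1; 5; 16; 20];
 [:: 1; 5; 17; 19];
 [:: 1; 5; 18; 22];
 [:: 1; 5; 21; 23];
 [:: 1; 5; 25; 29];
 [:: 1; 5; 27; 31];
 [:: 1; 6; 7; 15];
 [:: 1; 6; 9; 24];
 [:: 1; 6; 11; 12];
 [:: 1; 6; 14; 31];
 [:: 1; 6; 16; 27];
 [:: 1; 6; 17; 22];
 [:: 1; 6; 18; 21];
 [:: 1; 6; 19; 20];
 [:: 1; 6; 23; 28];
 [:: 1; 6; 25; 30];
 [:: 1; 6; 26; 29];
 [:: 1; 7; 8; 14];
 [:: 1; 7; 10; 17];
 [:: 1; 7; 11; 20];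
 [:: 1; 7; 12; 23];
 [:: 1; 7; 13; 18];
 [:: 1; 7; 16; 19];
 [:: 1; 7; 21; 22];
 [:: 1; 7; 24; 29];
 [:: 1; 7; 25; 31];
 [:: 1; 7; 27; 30];
 [:: 1; 8; 9; 15];
 [:: 1; 8; 11; 22];
 [:: 1; 8; 12; 17];
 [:: 1; 8; 13; 21];
 [:: 1; 8; 16; 18];
 [:: 1; 8; 19; 26];
 [:: 1; 8; 20; 29];
 [:: 1; 8; 23; 30];
 [:: 1; 8; 25; 27];
 [:: 1; 9; 10; 13];
 [:: 1; 9; 14; 16];
 [:: 1; 9; 17; 25];
 [:: 1; 9; 18; 26];
 [:: 1; 9; 19; 29];
 [:: 1; 9; 20; 28];
 [:: 1; 9; 21; 27];
 [:: 1; 9; 22; 23];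
 [:: 1; 9; 30; 31];
 [:: 1; 10; 11; 31];
 [:: 1; 10; 12; 26];
 [:: 1; 10; 15; 25];
 [:: 1; 10; 16; 23];
 [:: 1; 10; 19; 24];
 [:: 1; 10; 21; 30];
 [:: 1; 10; 22; 29];
 [:: 1; 10; 27; 28];
 [:: 1; 11; 13; 30];
 [:: 1; 11; 14; 27];
 [:: 1; 11; 16; 26];
 [:: 1; 11; 18; 19];
 [:: 1; 11; 23; 29];
 [:: 1; 11; 24; 25];
 [:: 1; 12; 14; 21];
 [:: 1; 12; 15; 16];
 [:: 1; 12; 18; 31];
 [:: 1; 12; 19; 30];
 [:: 1; 12; 20; 25];
 [:: 1; 12; 22; 27];
 [:: 1; 13; 14; 24];
 [:: 1; 13; 16; 28];
 [:: 1; 13; 17; 29];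
 [:: 1; 13; 19; 22];
 [:: 1; 13; 23; 27];
 [:: 1; 13; 26; 31];
 [:: 1; 14; 15; 18];
 [:: 1; 14; 17; 30];
 [:: 1; 14; 19; 28];
 [:: 1; 14; 22; 25];
 [:: 1; 15; 17; 31];
 [:: 1; 15; 19; 27];
 [:: 1; 15; 20; 26];
 [:: 1; 15; 21; 29];
 [:: 1; 15; 22; 24];
 [:: 1; 16; 24; 31];
 [:: 1; 16; 29; 30];
 [:: 1; 17; 20; 27];
 [:: 1; 17; 23; 26];
 [:: 1; 17; 24; 28];
 [:: 1; 18; 20; 30];
 [:: 1; 18; 23; 25];
 [:: 1; 18; 28; 29];
 [:: 1; 20; 21; 31];
 [:: 1; 20; 23; 24];
 [:: 1; 21; 24; 26];
 [:: 1; 21; 25; 28];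
 [:: 1; 22; 28; 31];
 [:: 1; 26; 28; 30];
 [:: 2; 3; 4; 10];
 [:: 2; 3; 5; 11];
 [:: 2; 3; 6; 7];
 [:: 2; 3; 8; 22];
 [:: 2; 3; 9; 23];
 [:: 2; 3; 12; 31];
 [:: 2; 3; 13; 30];
 [:: 2; 3; 14; 15];
 [:: 2; 3; 16; 26];
 [:: 2; 3; 17; 27];
 [:: 2; 3; 18; 19];
 [:: 2; 3; 20; 28];
 [:: 2; 3; 21; 29];
 [:: 2; 3; 24; 25];
 [:: 2; 4; 5; 12];
 [:: 2; 4; 6; 25];
 [:: 2; 4; 8; 23];
 [:: 2; 4; 9; 18];
 [:: 2; 4; 11; 13];
 [:: 2; 4; 14; 17];
 [:: 2; 4; 15; 20];
 [:: 2; 4; 16; 19];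
 [:: 2; 4; 21; 22];
 [:: 2; 4; 24; 29];
 [:: 2; 4; 26; 28];
 [:: 2; 4; 27; 30];
 [:: 2; 5; 6; 14];
 [:: 2; 5; 8; 15];
 [:: 2; 5; 10; 27];
 [:: 2; 5; 13; 28];
 [:: 2; 5; 16; 23];
 [:: 2; 5; 17; 22];
 [:: 2; 5; 18; 21];
 [:: 2; 5; 19; 24];
 [:: 2; 5; 20; 31];
 [:: 2; 5; 25; 30];
 [:: 2; 5; 26; 29];
 [:: 2; 6; 8; 12];
 [:: 2; 6; 9; 13];
 [:: 2; 6; 11; 27];
 [:: 2; 6; 15; 31];
 [:: 2; 6; 16; 18];
 [:: 2; 6; 17; 21];
 [:: 2; 6; 19; 23];
 [:: 2; 6; 20; 22];
 [:: 2; 6; 24; 28];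
 [:: 2; 6; 26; 30];
 [:: 2; 7; 8; 18];
 [:: 2; 7; 9; 17];
 [:: 2; 7; 10; 15];
 [:: 2; 7; 11; 31];
 [:: 2; 7; 12; 20];
 [:: 2; 7; 13; 23];
 [:: 2; 7; 14; 26];
 [:: 2; 7; 16; 28];
 [:: 2; 7; 19; 22];
 [:: 2; 7; 21; 25];
 [:: 2; 7; 24; 30];
 [:: 2; 7; 27; 29];
 [:: 2; 8; 9; 28];
 [:: 2; 8; 11; 21];
 [:: 2; 8; 13; 24];
 [:: 2; 8; 14; 29];
 [:: 2; 8; 16; 17];
 [:: 2; 8; 19; 25];
 [:: 2; 8; 20; 30];
 [:: 2; 8; 26; 27];
 [:: 2; 9; 10; 14];
 [:: 2; 9; 12; 26];
 [:: 2; 9; 15; 25];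
 [:: 2; 9; 16; 27];
 [:: 2; 9; 19; 20];
 [:: 2; 9; 21; 30];
 [:: 2; 9; 22; 29];
 [:: 2; 9; 24; 31];
 [:: 2; 10; 11; 12];
 [:: 2; 10; 13; 19];
 [:: 2; 10; 16; 30];
 [:: 2; 10; 17; 25];
 [:: 2; 10; 18; 26];
 [:: 2; 10; 20; 21];
 [:: 2; 10; 22; 24];
 [:: 2; 10; 23; 31];
 [:: 2; 10; 28; 29];
 [:: 2; 11; 14; 22];
 [:: 2; 11; 15; 18];
 [:: 2; 11; 16; 25];
 [:: 2; 11; 17; 19];
 [:: 2; 11; 20; 29];
 [:: 2; 11; 23; 30];
 [:: 2; 11; 24; 26];
 [:: 2; 12; 13; 17];
 [:: 2; 12; 15; 19];
 [:: 2; 12; 16; 24];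
 [:: 2; 12; 18; 28];
 [:: 2; 12; 21; 27];
 [:: 2; 12; 22; 30];
 [:: 2; 12; 23; 25];
 [:: 2; 13; 14; 27];
 [:: 2; 13; 15; 22];
 [:: 2; 13; 16; 31];
 [:: 2; 13; 18; 29];
 [:: 2; 13; 21; 26];
 [:: 2; 14; 16; 21];
 [:: 2; 14; 18; 30];
 [:: 2; 14; 19; 31];
 [:: 2; 14; 20; 24];
 [:: 2; 14; 25; 28];
 [:: 2; 15; 16; 29];
 [:: 2; 15; 17; 28];
 [:: 2; 15; 21; 24];
 [:: 2; 15; 23; 26];
 [:: 2; 17; 20; 26];
 [:: 2; 17; 23; 29];
 [:: 2; 17; 30; 31];
 [:: 2; 18; 20; 25];
 [:: 2; 18; 23; 24];
 [:: 2; 18; 27; 31];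
 [:: 2; 19; 27; 28];
 [:: 2; 19; 29; 30];
 [:: 2; 20; 23; 27];
 [:: 2; 21; 28; 31];
 [:: 2; 22; 23; 28];
 [:: 2; 22; 25; 27];
 [:: 2; 22; 26; 31];
 [:: 2; 25; 29; 31];
 [:: 3; 4; 5; 13];
 [:: 3; 4; 7; 15];
 [:: 3; 4; 9; 14];
 [:: 3; 4; 11; 26];
 [:: 3; 4; 12; 29];
 [:: 3; 4; 16; 23];
 [:: 3; 4; 17; 22];
 [:: 3; 4; 18; 25];
 [:: 3; 4; 19; 20];
 [:: 3; 4; 21; 30];
 [:: 3; 4; 24; 31];
 [:: 3; 4; 27; 28];
 [:: 3; 5; 7; 24];
 [:: 3; 5; 8; 19];
 [:: 3; 5; 9; 22];
 [:: 3; 5; 10; 12];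
 [:: 3; 5; 14; 21];
 [:: 3; 5; 15; 16];
 [:: 3; 5; 17; 18];
 [:: 3; 5; 20; 23];
 [:: 3; 5; 25; 28];
 [:: 3; 5; 26; 31];
 [:: 3; 5; 27; 29];
 [:: 3; 6; 8; 16];
 [:: 3; 6; 9; 19];
 [:: 3; 6; 10; 30];
 [:: 3; 6; 11; 14];
 [:: 3; 6; 12; 22];
 [:: 3; 6; 13; 21];
 [:: 3; 6; 15; 27];
 [:: 3; 6; 17; 29];
 [:: 3; 6; 18; 23];
 [:: 3; 6; 20; 24];
 [:: 3; 6; 25; 31];
 [:: 3; 6; 26; 28];
 [:: 3; 7; 8; 12];
 [:: 3; 7; 9; 13];
 [:: 3; 7; 10; 26];
 [:: 3; 7; 14; 30];
 [:: 3; 7; 16; 20];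
 [:: 3; 7; 17; 19];
 [:: 3; 7; 18; 22];
 [:: 3; 7; 21; 23];
 [:: 3; 7; 25; 29];
 [:: 3; 7; 27; 31];
 [:: 3; 8; 9; 29];
 [:: 3; 8; 11; 15];
 [:: 3; 8; 13; 27];
 [:: 3; 8; 14; 24];
 [:: 3; 8; 17; 26];
 [:: 3; 8; 18; 21];
 [:: 3; 8; 20; 31];
 [:: 3; 8; 23; 28];
 [:: 3; 8; 25; 30];
 [:: 3; 9; 10; 20];
 [:: 3; 9; 12; 25];
 [:: 3; 9; 15; 28];
 [:: 3; 9; 16; 17];
 [:: 3; 9; 18; 24];
 [:: 3; 9; 21; 31];
 [:: 3; 9; 26; 27];
 [:: 3; 10; 11; 13];
 [:: 3; 10; 14; 19];
 [:: 3; 10; 15; 23];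
 [:: 3; 10; 16; 18];
 [:: 3; 10; 17; 24];
 [:: 3; 10; 21; 28];
 [:: 3; 10; 22; 31];
 [:: 3; 10; 25; 27];
 [:: 3; 11; 12; 18];
 [:: 3; 11; 16; 24];
 [:: 3; 11; 17; 31];
 [:: 3; 11; 19; 27];
 [:: 3; 11; 20; 21];
 [:: 3; 11; 22; 30];
 [:: 3; 11; 23; 25];
 [:: 3; 11; 28; 29];
 [:: 3; 12; 13; 16];
 [:: 3; 12; 14; 23];
 [:: 3; 12; 15; 26];
 [:: 3; 12; 17; 30];
 [:: 3; 12; 19; 28];
 [:: 3; 12; 20; 27];
 [:: 3; 13; 14; 18];
 [:: 3; 13; 17; 25];
 [:: 3; 13; 19; 29];
 [:: 3; 13; 20; 26];
 [:: 3; 13; 22; 24];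
 [:: 3; 13; 23; 31];
 [:: 3; 14; 16; 29];
 [:: 3; 14; 17; 28];
 [:: 3; 14; 20; 25];
 [:: 3; 14; 22; 27];
 [:: 3; 15; 17; 20];
 [:: 3; 15; 18; 30];
 [:: 3; 15; 19; 31];
 [:: 3; 15; 21; 25];
 [:: 3; 15; 24; 29];
 [:: 3; 16; 21; 27];
 [:: 3; 16; 22; 28];
 [:: 3; 16; 30; 31];
 [:: 3; 18; 26; 29];
 [:: 3; 18; 28; 31];
 [:: 3; 19; 21; 24];
 [:: 3; 19; 22; 25];
 [:: 3; 19; 26; 30];
 [:: 3; 20; 29; 30];
 [:: 3; 21; 22; 26];
 [:: 3; 22; 23; 29];
 [:: 3; 23; 24; 26];
 [:: 3; 23; 27; 30];
 [:: 3; 24; 28; 30];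
 [:: 4; 5; 6; 7];
 [:: 4; 5; 8; 9];
 [:: 4; 5; 10; 25];
 [:: 4; 5; 11; 24];
 [:: 4; 5; 14; 16];
 [:: 4; 5; 15; 17];
 [:: 4; 5; 18; 26];
 [:: 4; 5; 19; 27];
 [:: 4; 5; 20; 21];
 [:: 4; 5; 22; 28];
 [:: 4; 5; 23; 29];
 [:: 4; 5; 30; 31];
 [:: 4; 6; 8; 10];
 [:: 4; 6; 9; 29];
 [:: 4; 6; 11; 31];
 [:: 4; 6; 12; 14];
 [:: 4; 6; 13; 15];
 [:: 4; 6; 16; 20];
 [:: 4; 6; 17; 19];
 [:: 4; 6; 18; 22];
 [:: 4; 6; 21; 28];
 [:: 4; 6; 23; 30];
 [:: 4; 6; 24; 26];
 [:: 4; 7; 8; 17];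
 [:: 4; 7; 9; 24];
 [:: 4; 7; 10; 27];
 [:: 4; 7; 11; 18];
 [:: 4; 7; 13; 26];
 [:: 4; 7; 14; 25];
 [:: 4; 7; 16; 22];
 [:: 4; 7; 19; 21];
 [:: 4; 7; 20; 23];
 [:: 4; 7; 28; 31];
 [:: 4; 7; 29; 30];
 [:: 4; 8; 11; 29];
 [:: 4; 8; 12; 15];
 [:: 4; 8; 13; 16];
 [:: 4; 8; 14; 27];
 [:: 4; 8; 18; 30];
 [:: 4; 8; 19; 22];
 [:: 4; 8; 20; 24];
 [:: 4; 8; 21; 25];
 [:: 4; 8; 26; 31];
 [:: 4; 9; 10; 21];
 [:: 4; 9; 11; 16];
 [:: 4; 9; 13; 20];
 [:: 4; 9; 15; 31];
 [:: 4; 9; 17; 28];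
 [:: 4; 9; 19; 30];
 [:: 4; 9; 22; 27];
 [:: 4; 9; 23; 26];
 [:: 4; 10; 11; 23];
 [:: 4; 10; 12; 13];
 [:: 4; 10; 15; 28];
 [:: 4; 10; 16; 24];
 [:: 4; 10; 17; 31];
 [:: 4; 10; 19; 29];
 [:: 4; 10; 20; 26];
 [:: 4; 10; 22; 30];
 [:: 4; 11; 12; 21];
 [:: 4; 11; 14; 30];
 [:: 4; 11; 19; 28];
 [:: 4; 11; 20; 27];
 [:: 4; 11; 22; 25];
 [:: 4; 12; 16; 30];
 [:: 4; 12; 17; 25];
 [:: 4; 12; 18; 19];
 [:: 4; 12; 20; 28];
 [:: 4; 12; 22; 24];
 [:: 4; 12; 23; 31];
 [:: 4; 12; 26; 27];
 [:: 4; 13; 14; 19];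
 [:: 4; 13; 17; 24];
 [:: 4; 13; 18; 27];
 [:: 4; 13; 21; 23];
 [:: 4; 13; 22; 31];
 [:: 4; 13; 28; 30];
 [:: 4; 14; 15; 26];
 [:: 4; 14; 18; 24];
 [:: 4; 14; 21; 31];
 [:: 4; 14; 22; 23];
 [:: 4; 14; 28; 29];
 [:: 4; 15; 16; 27];
 [:: 4; 15; 18; 21];
 [:: 4; 15; 19; 24];
 [:: 4; 15; 22; 29];
 [:: 4; 15; 25; 30];
 [:: 4; 16; 17; 26];
 [:: 4; 16; 25; 28];
 [:: 4; 16; 29; 31];
 [:: 4; 17; 18; 29];
 [:: 4; 17; 20; 30];
 [:: 4; 17; 23; 27];
 [:: 4; 18; 20; 31];
 [:: 4; 18; 23; 28];
 [:: 4; 19; 25; 26];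
 [:: 4; 20; 25; 29];
 [:: 4; 21; 24; 27];
 [:: 4; 21; 26; 29];
 [:: 4; 23; 24; 25];
 [:: 4; 25; 27; 31];
 [:: 5; 6; 8; 25];
 [:: 5; 6; 9; 16];
 [:: 5; 6; 10; 19];
 [:: 5; 6; 11; 26];
 [:: 5; 6; 12; 27];
 [:: 5; 6; 15; 24];
 [:: 5; 6; 17; 23];
 [:: 5; 6; 18; 20];
 [:: 5; 6; 21; 22];
 [:: 5; 6; 28; 31];
 [:: 5; 6; 29; 30];
 [:: 5; 7; 8; 28];
 [:: 5; 7; 9; 11];
 [:: 5; 7; 10; 30];
 [:: 5; 7; 12; 14];
 [:: 5; 7; 13; 15];
 [:: 5; 7; 16; 18];
 [:: 5; 7; 17; 21];
 [:: 5; 7; 19; 23];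
 [:: 5; 7; 20; 29];
 [:: 5; 7; 22; 31];
 [:: 5; 7; 25; 27];
 [:: 5; 8; 10; 17];
 [:: 5; 8; 11; 20];
 [:: 5; 8; 12; 21];
 [:: 5; 8; 14; 30];
 [:: 5; 8; 16; 29];
 [:: 5; 8; 18; 31];
 [:: 5; 8; 22; 27];
 [:: 5; 8; 23; 26];
 [:: 5; 9; 10; 28];
 [:: 5; 9; 12; 17];
 [:: 5; 9; 13; 14];
 [:: 5; 9; 15; 26];
 [:: 5; 9; 18; 23];
 [:: 5; 9; 19; 31];
 [:: 5; 9; 20; 24];
 [:: 5; 9; 21; 25];
 [:: 5; 9; 27; 30];
 [:: 5; 10; 11; 22];
 [:: 5; 10; 13; 20];
 [:: 5; 10; 15; 31];
 [:: 5; 10; 18; 29];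
 [:: 5; 10; 21; 26];
 [:: 5; 10; 23; 24];
 [:: 5; 11; 12; 13];
 [:: 5; 11; 14; 29];
 [:: 5; 11; 16; 30];
 [:: 5; 11; 17; 25];
 [:: 5; 11; 18; 28];
 [:: 5; 11; 21; 27];
 [:: 5; 11; 23; 31];
 [:: 5; 12; 15; 18];
 [:: 5; 12; 16; 25];
 [:: 5; 12; 19; 26];
 [:: 5; 12; 20; 22];
 [:: 5; 12; 23; 30];
 [:: 5; 12; 29; 31];
 [:: 5; 13; 16; 24];
 [:: 5; 13; 17; 31];
 [:: 5; 13; 18; 19];
 [:: 5; 13; 21; 29];
 [:: 5; 13; 22; 30];
 [:: 5; 13; 23; 25];
 [:: 5; 13; 26; 27];
 [:: 5; 14; 15; 27];
 [:: 5; 14; 17; 26];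
 [:: 5; 14; 18; 25];
 [:: 5; 14; 19; 20];
 [:: 5; 14; 23; 28];
 [:: 5; 14; 24; 31];
 [:: 5; 15; 19; 25];
 [:: 5; 15; 20; 30];
 [:: 5; 15; 22; 23];
 [:: 5; 15; 28; 29];
 [:: 5; 16; 17; 27];
 [:: 5; 16; 19; 28];
 [:: 5; 16; 21; 31];
 [:: 5; 16; 22; 26];
 [:: 5; 17; 24; 29];
 [:: 5; 17; 28; 30];
 [:: 5; 18; 24; 27];
 [:: 5; 19; 21; 30];
 [:: 5; 19; 22; 29];
 [:: 5; 20; 25; 26];
 [:: 5; 20; 27; 28];
 [:: 5; 21; 24; 28];
 [:: 5; 22; 24; 25];
 [:: 5; 24; 26; 30];
 [:: 6; 7; 8; 27];
 [:: 6; 7; 9; 26];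
 [:: 6; 7; 10; 11];
 [:: 6; 7; 12; 18];
 [:: 6; 7; 13; 19];
 [:: 6; 7; 16; 24];
 [:: 6; 7; 17; 25];
 [:: 6; 7; 20; 30];
 [:: 6; 7; 21; 31];
 [:: 6; 7; 22; 23];
 [:: 6; 7; 28; 29];
 [:: 6; 8; 9; 21];
 [:: 6; 8; 11; 23];
 [:: 6; 8; 13; 30];
 [:: 6; 8; 14; 15];
 [:: 6; 8; 17; 31];
 [:: 6; 8; 18; 26];
 [:: 6; 8; 19; 29];
 [:: 6; 8; 20; 28];
 [:: 6; 8; 22; 24];
 [:: 6; 9; 10; 31];
 [:: 6; 9; 11; 18];
 [:: 6; 9; 12; 28];
 [:: 6; 9; 14; 23];
 [:: 6; 9; 17; 30];
 [:: 6; 9; 20; 27];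
 [:: 6; 9; 22; 25];
 [:: 6; 10; 12; 25];
 [:: 6; 10; 13; 14];
 [:: 6; 10; 15; 18];
 [:: 6; 10; 16; 28];
 [:: 6; 10; 17; 20];
 [:: 6; 10; 22; 26];
 [:: 6; 10; 23; 27];
 [:: 6; 10; 24; 29];
 [:: 6; 11; 13; 29];
 [:: 6; 11; 15; 22];
 [:: 6; 11; 17; 28];
 [:: 6; 11; 19; 30];
 [:: 6; 11; 20; 25];
 [:: 6; 11; 21; 24];
 [:: 6; 12; 13; 24];
 [:: 6; 12; 15; 17];
 [:: 6; 12; 16; 26];
 [:: 6; 12; 20; 21];
 [:: 6; 12; 23; 29];
 [:: 6; 12; 30; 31];
 [:: 6; 13; 16; 23];
 [:: 6; 13; 17; 26];
 [:: 6; 13; 18; 25];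
 [:: 6; 13; 20; 31];
 [:: 6; 13; 27; 28];
 [:: 6; 14; 16; 17];
 [:: 6; 14; 18; 28];
 [:: 6; 14; 19; 27];
 [:: 6; 14; 20; 26];
 [:: 6; 14; 21; 29];
 [:: 6; 14; 22; 30];
 [:: 6; 14; 24; 25];
 [:: 6; 15; 16; 25];
 [:: 6; 15; 19; 26];
 [:: 6; 15; 20; 29];
 [:: 6; 15; 21; 23];
 [:: 6; 15; 28; 30];
 [:: 6; 16; 19; 31];
 [:: 6; 16; 21; 30];
 [:: 6; 16; 22; 29];
 [:: 6; 17; 24; 27];
 [:: 6; 18; 19; 24];
 [:: 6; 18; 27; 30];
 [:: 6; 18; 29; 31];
 [:: 6; 19; 21; 25];
 [:: 6; 19; 22; 28];
 [:: 6; 21; 26; 27];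
 [:: 6; 22; 27; 31];
 [:: 6; 23; 24; 31];
 [:: 6; 23; 25; 26];
 [:: 6; 25; 27; 29];
 [:: 7; 8; 9; 20];
 [:: 7; 8; 10; 19];
 [:: 7; 8; 11; 30];
 [:: 7; 8; 13; 29];
 [:: 7; 8; 15; 22];
 [:: 7; 8; 16; 31];
 [:: 7; 8; 21; 26];
 [:: 7; 8; 23; 24];
 [:: 7; 9; 10; 22];
 [:: 7; 9; 12; 31];
 [:: 7; 9; 14; 15];
 [:: 7; 9; 16; 30];
 [:: 7; 9; 18; 28];
 [:: 7; 9; 19; 27];
 [:: 7; 9; 21; 29];
 [:: 7; 9; 23; 25];
 [:: 7; 10; 12; 28];
 [:: 7; 10; 14; 23];
 [:: 7; 10; 16; 29];
 [:: 7; 10; 18; 31];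
 [:: 7; 10; 20; 25];
 [:: 7; 10; 21; 24];
 [:: 7; 11; 12; 15];
 [:: 7; 11; 13; 24];
 [:: 7; 11; 14; 19];
 [:: 7; 11; 16; 21];
 [:: 7; 11; 17; 29];
 [:: 7; 11; 22; 26];
 [:: 7; 11; 23; 27];
 [:: 7; 11; 25; 28];
 [:: 7; 12; 13; 25];
 [:: 7; 12; 16; 27];
 [:: 7; 12; 17; 22];
 [:: 7; 12; 19; 24];
 [:: 7; 12; 21; 30];
 [:: 7; 12; 26; 29];
 [:: 7; 13; 14; 16];
 [:: 7; 13; 17; 27];
 [:: 7; 13; 20; 21];
 [:: 7; 13; 22; 28];
 [:: 7; 13; 30; 31];
 [:: 7; 14; 17; 24];
 [:: 7; 14; 18; 27];
 [:: 7; 14; 20; 22];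
 [:: 7; 14; 21; 28];
 [:: 7; 14; 29; 31];
 [:: 7; 15; 16; 17];
 [:: 7; 15; 18; 26];
 [:: 7; 15; 19; 29];
 [:: 7; 15; 20; 28];
 [:: 7; 15; 21; 27];
 [:: 7; 15; 23; 31];
 [:: 7; 15; 24; 25];
 [:: 7; 16; 25; 26];
 [:: 7; 17; 18; 30];
 [:: 7; 17; 20; 31];
 [:: 7; 17; 23; 28];
 [:: 7; 18; 19; 25];
 [:: 7; 18; 20; 24];
 [:: 7; 18; 23; 29];
 [:: 7; 19; 26; 31];
 [:: 7; 19; 28; 30];
 [:: 7; 20; 26; 27];
 [:: 7; 22; 24; 27];
 [:: 7; 22; 25; 30];
 [:: 7; 23; 26; 30];
 [:: 7; 24; 26; 28];
 [:: 8; 9; 10; 11];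
 [:: 8; 9; 12; 13];
 [:: 8; 9; 16; 26];
 [:: 8; 9; 17; 27];
 [:: 8; 9; 18; 19];
 [:: 8; 9; 22; 30];
 [:: 8; 9; 23; 31];
 [:: 8; 9; 24; 25];
 [:: 8; 10; 12; 23];
 [:: 8; 10; 13; 15];
 [:: 8; 10; 14; 21];
 [:: 8; 10; 16; 25];
 [:: 8; 10; 18; 27];
 [:: 8; 10; 20; 22];
 [:: 8; 10; 24; 28];
 [:: 8; 10; 26; 30];
 [:: 8; 10; 29; 31];
 [:: 8; 11; 13; 14];
 [:: 8; 11; 16; 19];
 [:: 8; 11; 17; 18];
 [:: 8; 11; 24; 27];
 [:: 8; 11; 25; 31];
 [:: 8; 11; 26; 28];
 [:: 8; 12; 14; 19];
 [:: 8; 12; 16; 20];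
 [:: 8; 12; 18; 22];
 [:: 8; 12; 24; 26];
 [:: 8; 12; 25; 29];
 [:: 8; 12; 27; 31];
 [:: 8; 12; 28; 30];
 [:: 8; 13; 17; 23];
 [:: 8; 13; 18; 20];
 [:: 8; 13; 19; 31];
 [:: 8; 13; 22; 26];
 [:: 8; 13; 25; 28];
 [:: 8; 14; 16; 22];
 [:: 8; 14; 17; 20];
 [:: 8; 14; 18; 23];
 [:: 8; 14; 25; 26];
 [:: 8; 14; 28; 31];
 [:: 8; 15; 16; 23];
 [:: 8; 15; 18; 25];
 [:: 8; 15; 19; 20];
 [:: 8; 15; 21; 30];
 [:: 8; 15; 24; 31];
 [:: 8; 15; 26; 29];
 [:: 8; 15; 27; 28];
 [:: 8; 16; 21; 28];
 [:: 8; 16; 27; 30];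
 [:: 8; 17; 19; 28];
 [:: 8; 17; 21; 24];
 [:: 8; 17; 22; 25];
 [:: 8; 17; 29; 30];
 [:: 8; 18; 24; 29];
 [:: 8; 19; 21; 23];
 [:: 8; 19; 24; 30];
 [:: 8; 20; 21; 27];
 [:: 8; 20; 23; 25];
 [:: 8; 21; 22; 31];
 [:: 8; 22; 28; 29];
 [:: 8; 23; 27; 29];
 [:: 9; 10; 12; 15];
 [:: 9; 10; 16; 19];
 [:: 9; 10; 17; 18];
 [:: 9; 10; 24; 30];
 [:: 9; 10; 25; 26];
 [:: 9; 10; 27; 29];
 [:: 9; 11; 12; 14];
 [:: 9; 11; 13; 22];
 [:: 9; 11; 15; 20];
 [:: 9; 11; 17; 24];
 [:: 9; 11; 19; 26];
 [:: 9; 11; 21; 23];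
 [:: 9; 11; 25; 29];
 [:: 9; 11; 27; 31];
 [:: 9; 11; 28; 30];
 [:: 9; 12; 16; 22];
 [:: 9; 12; 18; 30];
 [:: 9; 12; 19; 21];
 [:: 9; 12; 23; 27];
 [:: 9; 12; 24; 29];
 [:: 9; 13; 15; 18];
 [:: 9; 13; 17; 21];
 [:: 9; 13; 19; 23];
 [:: 9; 13; 24; 28];
 [:: 9; 13; 25; 27];
 [:: 9; 13; 26; 30];
 [:: 9; 13; 29; 31];
 [:: 9; 14; 17; 22];
 [:: 9; 14; 18; 21];
 [:: 9; 14; 19; 24];
 [:: 9; 14; 20; 31];
 [:: 9; 14; 25; 30];
 [:: 9; 14; 26; 29];
 [:: 9; 14; 27; 28];
 [:: 9; 15; 16; 21];
 [:: 9; 15; 17; 23];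
 [:: 9; 15; 19; 22];
 [:: 9; 15; 24; 27];
 [:: 9; 15; 29; 30];
 [:: 9; 16; 18; 29];
 [:: 9; 16; 20; 25];
 [:: 9; 16; 23; 24];
 [:: 9; 16; 28; 31];
 [:: 9; 17; 20; 29];
 [:: 9; 17; 26; 31];
 [:: 9; 18; 20; 22];
 [:: 9; 18; 25; 31];
 [:: 9; 19; 25; 28];
 [:: 9; 20; 21; 26];
 [:: 9; 20; 23; 30];
 [:: 9; 21; 22; 24];
 [:: 9; 22; 26; 28];
 [:: 9; 23; 28; 29];
 [:: 10; 11; 14; 15];
 [:: 10; 11; 16; 17];
 [:: 10; 11; 18; 24];
 [:: 10; 11; 19; 25];
 [:: 10; 11; 20; 28];
 [:: 10; 11; 21; 29];
 [:: 10; 11; 26; 27];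
 [:: 10; 12; 14; 17];
 [:: 10; 12; 16; 21];
 [:: 10; 12; 18; 20];
 [:: 10; 12; 19; 22];
 [:: 10; 12; 24; 27];
 [:: 10; 12; 29; 30];
 [:: 10; 13; 16; 27];
 [:: 10; 13; 17; 22];
 [:: 10; 13; 18; 21];
 [:: 10; 13; 23; 28];
 [:: 10; 13; 24; 31];
 [:: 10; 13; 25; 30];
 [:: 10; 13; 26; 29];
 [:: 10; 14; 16; 20];
 [:: 10; 14; 18; 22];
 [:: 10; 14; 24; 26];
 [:: 10; 14; 25; 29];
 [:: 10; 14; 27; 31];
 [:: 10; 14; 28; 30];
 [:: 10; 15; 16; 22];
 [:: 10; 15; 17; 29];
 [:: 10; 15; 19; 21];
 [:: 10; 15; 20; 24];
 [:: 10; 15; 27; 30];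
 [:: 10; 16; 26; 31];
 [:: 10; 17; 19; 30];
 [:: 10; 17; 21; 23];
 [:: 10; 17; 26; 28];
 [:: 10; 18; 23; 30];
 [:: 10; 18; 25; 28];
 [:: 10; 19; 20; 27];
 [:: 10; 19; 23; 26];
 [:: 10; 19; 28; 31];
 [:: 10; 20; 23; 29];
 [:: 10; 20; 30; 31];
 [:: 10; 21; 22; 27];
 [:: 10; 21; 25; 31];
 [:: 10; 22; 23; 25];
 [:: 11; 12; 16; 23];
 [:: 11; 12; 17; 26];
 [:: 11; 12; 19; 20];
 [:: 11; 12; 22; 29];
 [:: 11; 12; 24; 31];
 [:: 11; 12; 25; 30];
 [:: 11; 12; 27; 28];
 [:: 11; 13; 15; 16];
 [:: 11; 13; 17; 20];
 [:: 11; 13; 18; 23];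
 [:: 11; 13; 19; 21];
 [:: 11; 13; 25; 26];
 [:: 11; 13; 28; 31];
 [:: 11; 14; 16; 28];
 [:: 11; 14; 17; 23];
 [:: 11; 14; 18; 20];
 [:: 11; 14; 21; 25];
 [:: 11; 14; 26; 31];
 [:: 11; 15; 17; 21];
 [:: 11; 15; 19; 23];
 [:: 11; 15; 24; 28];
 [:: 11; 15; 25; 27];
 [:: 11; 15; 26; 30];
 [:: 11; 15; 29; 31];
 [:: 11; 16; 18; 31];
 [:: 11; 16; 20; 22];
 [:: 11; 16; 27; 29];
 [:: 11; 17; 27; 30];
 [:: 11; 18; 21; 26];
 [:: 11; 18; 22; 27];
 [:: 11; 18; 29; 30];
 [:: 11; 19; 22; 31];
 [:: 11; 19; 24; 29];
 [:: 11; 20; 23; 26];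
 [:: 11; 20; 24; 30];
 [:: 11; 21; 22; 28];
 [:: 11; 21; 30; 31];
 [:: 11; 22; 23; 24];
 [:: 12; 13; 14; 15];
 [:: 12; 13; 18; 26];
 [:: 12; 13; 19; 27];
 [:: 12; 13; 20; 30];
 [:: 12; 13; 21; 31];
 [:: 12; 13; 22; 23];
 [:: 12; 13; 28; 29];
 [:: 12; 14; 16; 18];
 [:: 12; 14; 20; 29];
 [:: 12; 14; 22; 31];
 [:: 12; 14; 24; 28];
 [:: 12; 14; 25; 27];
 [:: 12; 14; 26; 30];
 [:: 12; 15; 20; 23];
 [:: 12; 15; 21; 22];
 [:: 12; 15; 24; 30];
 [:: 12; 15; 27; 29];
 [:: 12; 15; 28; 31];
 [:: 12; 16; 17; 31];
 [:: 12; 16; 19; 29];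
 [:: 12; 17; 18; 27];
 [:: 12; 17; 19; 23];
 [:: 12; 17; 20; 24];
 [:: 12; 17; 21; 28];
 [:: 12; 18; 21; 29];
 [:: 12; 18; 24; 25];
 [:: 12; 19; 25; 31];
 [:: 12; 20; 26; 31];
 [:: 12; 21; 23; 24];
 [:: 12; 21; 25; 26];
 [:: 12; 22; 25; 28];
 [:: 12; 23; 26; 28];
 [:: 13; 14; 20; 23];
 [:: 13; 14; 21; 22];
 [:: 13; 14; 25; 31];
 [:: 13; 14; 26; 28];
 [:: 13; 14; 29; 30];
 [:: 13; 15; 17; 19];
 [:: 13; 15; 21; 28];
 [:: 13; 15; 23; 30];
 [:: 13; 15; 24; 26];
 [:: 13; 15; 25; 29];
 [:: 13; 15; 27; 31];
 [:: 13; 16; 17; 30];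
 [:: 13; 16; 18; 22];
 [:: 13; 16; 19; 26];
 [:: 13; 16; 20; 29];
 [:: 13; 16; 21; 25];
 [:: 13; 17; 18; 28];
 [:: 13; 18; 24; 30];
 [:: 13; 19; 20; 28];
 [:: 13; 19; 24; 25];
 [:: 13; 20; 22; 25];
 [:: 13; 20; 24; 27];
 [:: 13; 21; 27; 30];
 [:: 13; 22; 27; 29];
 [:: 13; 23; 24; 29];
 [:: 14; 15; 16; 24];
 [:: 14; 15; 17; 25];
 [:: 14; 15; 20; 21];
 [:: 14; 15; 22; 28];
 [:: 14; 15; 23; 29];
 [:: 14; 15; 30; 31];
 [:: 14; 16; 19; 25];
 [:: 14; 16; 23; 31];
 [:: 14; 16; 26; 27];
 [:: 14; 17; 18; 31];
 [:: 14; 17; 19; 21];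
 [:: 14; 17; 27; 29];
 [:: 14; 18; 19; 29];
 [:: 14; 19; 22; 26];
 [:: 14; 19; 23; 30];
 [:: 14; 20; 27; 30];
 [:: 14; 21; 23; 26];
 [:: 14; 21; 24; 30];
 [:: 14; 22; 24; 29];
 [:: 14; 23; 24; 27];
 [:: 15; 16; 18; 20];
 [:: 15; 16; 19; 30];
 [:: 15; 16; 26; 28];
 [:: 15; 17; 18; 24];
 [:: 15; 17; 22; 30];
 [:: 15; 17; 26; 27];
 [:: 15; 18; 19; 28];
 [:: 15; 18; 22; 31];
 [:: 15; 18; 23; 27];
 [:: 15; 20; 22; 27];
 [:: 15; 20; 25; 31];
 [:: 15; 21; 26; 31];
 [:: 15; 22; 25; 26];
 [:: 15; 23; 25; 28];
 [:: 16; 17; 18; 19];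
 [:: 16; 17; 20; 21];
 [:: 16; 17; 22; 24];
 [:: 16; 17; 23; 25];
 [:: 16; 17; 28; 29];
 [:: 16; 18; 21; 23];
 [:: 16; 18; 24; 26];
 [:: 16; 18; 25; 27];
 [:: 16; 18; 28; 30];
 [:: 16; 19; 20; 24];
 [:: 16; 19; 21; 22];
 [:: 16; 19; 23; 27];
 [:: 16; 20; 23; 28];
 [:: 16; 20; 26; 30];
 [:: 16; 20; 27; 31];
 [:: 16; 21; 24; 29];
 [:: 16; 22; 23; 30];
 [:: 16; 22; 25; 31];
 [:: 16; 23; 26; 29];
 [:: 16; 24; 25; 30];
 [:: 16; 24; 27; 28];
 [:: 17; 18; 20; 23];
 [:: 17; 18; 21; 25];
 [:: 17; 18; 22; 26];
 [:: 17; 19; 20; 22];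
 [:: 17; 19; 24; 26];
 [:: 17; 19; 25; 27];
 [:: 17; 19; 29; 31];
 [:: 17; 20; 25; 28];
 [:: 17; 21; 22; 29];
 [:: 17; 21; 26; 30];
 [:: 17; 21; 27; 31];
 [:: 17; 22; 23; 31];
 [:: 17; 22; 27; 28];
 [:: 17; 23; 24; 30];
 [:: 17; 24; 25; 31];
 [:: 17; 25; 26; 29];
 [:: 18; 19; 20; 26];
 [:: 18; 19; 21; 27];
 [:: 18; 19; 22; 23];
 [:: 18; 19; 30; 31];
 [:: 18; 20; 21; 28];
 [:: 18; 20; 27; 29];
 [:: 18; 21; 22; 30];
 [:: 18; 21; 24; 31];
 [:: 18; 22; 24; 28];
 [:: 18; 22; 25; 29];
 [:: 18; 23; 26; 31];
 [:: 18; 25; 26; 30];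
 [:: 18; 26; 27; 28];
 [:: 19; 20; 21; 29];
 [:: 19; 20; 23; 31];
 [:: 19; 20; 25; 30];
 [:: 19; 21; 26; 28];
 [:: 19; 22; 27; 30];
 [:: 19; 23; 24; 28];
 [:: 19; 23; 25; 29];
 [:: 19; 24; 27; 31];
 [:: 19; 26; 27; 29];
 [:: 20; 21; 22; 23];
 [:: 20; 21; 24; 25];
 [:: 20; 22; 24; 26];
 [:: 20; 22; 28; 30];
 [:: 20; 22; 29; 31];
 [:: 20; 24; 28; 31];
 [:: 20; 26; 28; 29];
 [:: 21; 23; 25; 27];
 [:: 21; 23; 28; 30];
 [:: 21; 23; 29; 31];
 [:: 21; 25; 29; 30];
 [:: 21; 27; 28; 29];
 [:: 22; 23; 26; 27];
 [:: 22; 24; 30; 31];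
 [:: 22; 26; 29; 30];
 [:: 23; 25; 30; 31];
 [:: 23; 27; 28; 31];
 [:: 24; 25; 26; 27];
 [:: 24; 25; 28; 29];
 [:: 24; 26; 29; 31];
 [:: 24; 27; 29; 30];
 [:: 25; 26; 28; 31];
 [:: 25; 27; 28; 30];
 [:: 26; 27; 30; 31];
 [:: 28; 29; 30; 31]].
Definition cols32 : seq (seq nat) := [:: [:: 7; 8; 1; 13; 2; 14; 5; 3; 10; 9; 12; 0; 4; 11; 6; 1; 9; 8; 11; 5; 4; 13; 0; 10; 6; 14; 3; 2; 15; 4; 3; 0; 12; 14; 13; 9; 6; 11; 1; 10; 5; 8; 2; 14; 7; 10; 12; 6; 11; 2; 5; 15; 9; 3; 0; 2; 6; 0; 13; 11; 10; 1; 4; 7; 5; 12; 14; 5; 2; 7; 11; 12; 6; 13; 0; 10; 4; 9; 6; 15; 3; 4; 12; 10; 11; 2; 14; 1; 7; 9; 14; 15; 0; 10; 13; 12; 8; 5; 1; 14; 3; 8; 9; 11; 0; 4; 8; 10; 5; 3; 6; 13; 9; 4; 2; 7; 1; 3; 12; 10; 8; 6; 0; 3; 1; 2; 1; 12; 8; 14; 0; 7; 9; 13; 11; 8; 15; 14; 7; 4; 13; 8; 12; 5; 11; 2; 4; 5; 7; 6; 1; 7; 3; 9; 13];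
 [:: 7; 8; 13; 1; 14; 2; 5; 10; 3; 9; 0; 12; 11; 4; 6; 3; 4; 0; 12; 14; 9; 13; 11; 6; 10; 1; 5; 2; 8; 9; 1; 8; 5; 11; 13; 4; 0; 6; 10; 3; 14; 2; 15; 6; 2; 13; 0; 11; 1; 10; 4; 7; 5; 12; 14; 7; 14; 10; 6; 12; 11; 5; 2; 15; 9; 3; 0; 5; 6; 15; 3; 12; 4; 11; 10; 2; 14; 1; 2; 11; 7; 6; 12; 13; 0; 4; 10; 9; 7; 1; 3; 14; 8; 9; 11; 0; 4; 9; 14; 15; 10; 0; 12; 13; 8; 5; 8; 4; 2; 7; 1; 3; 12; 10; 10; 5; 3; 6; 13; 9; 12; 1; 14; 8; 0; 7; 8; 0; 6; 3; 1; 2; 9; 7; 4; 13; 13; 11; 15; 8; 14; 11; 2; 8; 12; 5; 4; 5; 7; 6; 3; 7; 1; 9; 13];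
 [:: 7; 8; 9; 1; 11; 5; 4; 0; 13; 14; 3; 10; 6; 2; 15; 3; 0; 4; 14; 12; 6; 11; 13; 9; 5; 1; 10; 2; 8; 1; 13; 8; 2; 14; 3; 10; 5; 12; 0; 9; 4; 11; 6; 5; 14; 7; 11; 2; 12; 6; 13; 0; 9; 10; 4; 7; 15; 6; 3; 10; 11; 4; 12; 2; 1; 14; 12; 6; 10; 11; 2; 15; 5; 9; 0; 3; 0; 13; 2; 6; 10; 1; 11; 7; 4; 5; 14; 12; 8; 1; 5; 10; 6; 3; 13; 9; 9; 2; 4; 1; 7; 12; 3; 10; 7; 14; 0; 10; 15; 8; 13; 12; 5; 14; 3; 9; 8; 0; 11; 4; 9; 1; 11; 13; 14; 8; 15; 8; 12; 4; 7; 13; 3; 6; 0; 1; 2; 8; 14; 7; 0; 5; 4; 7; 12; 8; 5; 11; 2; 3; 9; 6; 7; 1; 13];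
 [:: 7; 0; 3; 4; 14; 12; 11; 6; 9; 13; 1; 5; 10; 8; 2; 9; 8; 1; 5; 11; 0; 4; 13; 3; 14; 6; 10; 2; 15; 13; 1; 8; 14; 2; 10; 3; 5; 0; 12; 9; 11; 4; 6; 5; 7; 15; 6; 3; 11; 10; 12; 4; 2; 1; 14; 14; 11; 7; 2; 6; 12; 13; 0; 9; 4; 10; 13; 0; 6; 2; 1; 10; 11; 7; 4; 5; 14; 12; 6; 12; 10; 11; 15; 2; 5; 9; 0; 3; 8; 9; 2; 4; 1; 7; 12; 3; 10; 1; 5; 10; 6; 3; 13; 9; 7; 3; 14; 8; 9; 0; 11; 4; 14; 10; 0; 15; 8; 12; 13; 5; 9; 12; 8; 4; 7; 13; 1; 11; 13; 14; 15; 8; 14; 8; 7; 0; 3; 0; 6; 1; 2; 5; 4; 7; 11; 2; 12; 8; 5; 9; 3; 6; 7; 1; 13];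
 [:: 8; 14; 7; 1; 4; 11; 12; 6; 10; 9; 5; 15; 2; 3; 0; 3; 9; 11; 2; 10; 1; 6; 0; 13; 4; 5; 7; 14; 12; 5; 1; 8; 12; 6; 2; 7; 11; 0; 13; 4; 10; 9; 13; 0; 15; 3; 6; 11; 10; 2; 4; 12; 1; 14; 7; 5; 3; 10; 2; 14; 4; 11; 9; 12; 0; 6; 4; 13; 0; 11; 5; 10; 2; 14; 6; 3; 15; 13; 9; 6; 11; 12; 14; 5; 10; 1; 8; 2; 8; 9; 14; 10; 1; 3; 6; 0; 2; 1; 12; 3; 4; 0; 7; 8; 14; 9; 7; 2; 8; 15; 14; 13; 11; 14; 5; 13; 7; 4; 13; 12; 8; 15; 0; 10; 5; 1; 11; 0; 8; 9; 4; 8; 13; 3; 6; 9; 3; 7; 12; 1; 10; 6; 1; 7; 3; 8; 4; 12; 5; 9; 5; 2; 11; 7; 13];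
 [:: 8; 9; 3; 2; 11; 1; 10; 6; 13; 0; 4; 5; 7; 14; 12; 7; 14; 4; 1; 11; 6; 12; 10; 5; 9; 15; 2; 3; 0; 5; 13; 0; 15; 3; 6; 10; 11; 4; 2; 12; 1; 14; 1; 8; 6; 12; 2; 11; 7; 0; 13; 4; 9; 10; 7; 5; 10; 3; 14; 2; 11; 4; 9; 0; 12; 6; 9; 13; 11; 6; 12; 14; 5; 10; 1; 2; 8; 13; 4; 0; 5; 11; 2; 10; 14; 6; 3; 15; 12; 1; 3; 4; 0; 7; 14; 8; 8; 14; 9; 10; 3; 1; 0; 6; 2; 9; 14; 5; 13; 7; 4; 7; 2; 15; 8; 14; 13; 11; 1; 11; 0; 8; 9; 4; 12; 13; 8; 15; 10; 0; 5; 8; 3; 12; 7; 1; 10; 13; 3; 6; 9; 6; 3; 8; 4; 1; 7; 9; 12; 5; 2; 11; 5; 7; 13];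
 [:: 5; 14; 3; 8; 1; 2; 12; 6; 7; 11; 0; 13; 10; 9; 4; 7; 9; 0; 13; 3; 15; 6; 2; 4; 11; 10; 12; 14; 1; 8; 1; 4; 12; 6; 11; 10; 9; 15; 5; 2; 0; 3; 10; 1; 11; 2; 0; 13; 6; 5; 4; 7; 12; 14; 7; 4; 0; 13; 11; 5; 14; 2; 10; 3; 6; 15; 6; 11; 13; 9; 14; 12; 10; 5; 1; 2; 8; 3; 10; 5; 2; 14; 4; 11; 12; 0; 9; 6; 9; 1; 2; 7; 14; 8; 15; 11; 13; 8; 12; 5; 14; 13; 4; 7; 10; 9; 14; 1; 3; 6; 0; 2; 4; 3; 7; 0; 8; 14; 8; 1; 13; 6; 3; 9; 7; 12; 3; 1; 10; 8; 13; 12; 0; 10; 15; 5; 0; 11; 9; 8; 4; 3; 5; 12; 9; 6; 1; 7; 4; 8; 7; 5; 11; 2; 13];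
 [:: 5; 9; 7; 0; 13; 3; 15; 6; 4; 2; 10; 11; 12; 14; 1; 3; 14; 8; 1; 2; 6; 12; 11; 7; 0; 13; 9; 10; 4; 8; 1; 10; 2; 11; 13; 0; 6; 5; 4; 7; 12; 14; 4; 1; 6; 12; 11; 10; 15; 9; 5; 2; 0; 3; 7; 11; 6; 9; 13; 14; 12; 10; 5; 1; 8; 2; 0; 4; 13; 5; 11; 2; 14; 10; 3; 6; 15; 10; 3; 5; 14; 2; 11; 4; 0; 12; 9; 6; 9; 12; 8; 5; 14; 13; 4; 7; 1; 2; 7; 14; 15; 8; 11; 13; 4; 3; 7; 0; 14; 8; 9; 10; 14; 3; 1; 0; 6; 2; 8; 12; 7; 3; 1; 10; 1; 13; 6; 3; 9; 0; 11; 8; 9; 4; 8; 12; 13; 10; 0; 15; 5; 9; 3; 5; 12; 6; 4; 8; 1; 7; 7; 2; 11; 5; 13];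
 [:: 7; 11; 9; 2; 14; 1; 4; 6; 15; 13; 10; 0; 12; 5; 8; 1; 5; 14; 3; 2; 13; 12; 10; 6; 4; 9; 11; 0; 8; 8; 10; 15; 12; 5; 2; 14; 0; 7; 9; 3; 13; 6; 4; 2; 6; 14; 0; 13; 11; 1; 10; 12; 3; 7; 5; 4; 8; 13; 7; 11; 12; 1; 2; 6; 0; 3; 1; 12; 13; 9; 11; 6; 0; 7; 14; 8; 9; 3; 6; 10; 5; 14; 11; 15; 8; 13; 10; 0; 11; 1; 3; 13; 4; 7; 7; 8; 12; 0; 6; 4; 11; 9; 1; 9; 8; 6; 3; 15; 10; 14; 2; 3; 8; 2; 1; 10; 5; 14; 3; 0; 2; 5; 15; 9; 12; 14; 5; 7; 4; 10; 4; 9; 13; 0; 14; 12; 1; 2; 4; 10; 11; 1; 5; 7; 5; 11; 3; 8; 13; 12; 7; 2; 9; 6; 4];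
 [:: 7; 5; 1; 3; 14; 2; 13; 12; 6; 10; 4; 9; 11; 0; 8; 9; 11; 2; 14; 1; 4; 6; 15; 10; 13; 12; 0; 5; 8; 8; 4; 6; 2; 14; 0; 13; 11; 1; 10; 12; 3; 7; 15; 10; 5; 12; 2; 14; 0; 7; 9; 3; 13; 6; 5; 12; 1; 9; 13; 11; 6; 0; 7; 8; 14; 8; 4; 13; 11; 7; 12; 2; 1; 0; 6; 3; 9; 10; 11; 0; 1; 3; 13; 4; 7; 3; 6; 10; 5; 14; 15; 11; 8; 13; 7; 8; 0; 12; 6; 11; 4; 9; 3; 2; 8; 10; 1; 5; 9; 1; 8; 6; 3; 15; 10; 14; 2; 12; 5; 14; 7; 4; 14; 3; 0; 5; 2; 15; 9; 14; 1; 12; 2; 4; 11; 10; 4; 10; 9; 13; 0; 7; 5; 11; 3; 1; 5; 13; 12; 8; 7; 9; 2; 4; 6];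
 [:: 8; 11; 1; 12; 5; 10; 15; 14; 2; 7; 0; 3; 9; 13; 6; 9; 5; 2; 6; 4; 0; 14; 11; 13; 10; 1; 3; 12; 7; 7; 14; 2; 4; 1; 6; 13; 10; 15; 5; 0; 12; 8; 2; 14; 3; 12; 13; 10; 6; 4; 9; 0; 11; 8; 9; 4; 1; 6; 3; 5; 10; 11; 15; 14; 13; 8; 8; 12; 0; 11; 10; 3; 1; 13; 7; 4; 5; 13; 12; 7; 11; 1; 2; 6; 0; 3; 13; 9; 6; 11; 7; 0; 14; 8; 7; 8; 9; 1; 3; 6; 15; 14; 10; 2; 3; 2; 8; 5; 1; 10; 8; 6; 12; 0; 4; 11; 9; 14; 9; 10; 4; 13; 0; 12; 1; 14; 2; 10; 11; 4; 0; 3; 2; 15; 5; 9; 14; 5; 12; 7; 4; 8; 7; 13; 12; 1; 5; 11; 5; 3; 9; 6; 2; 4; 7];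
 [:: 8; 5; 9; 6; 2; 4; 0; 14; 11; 13; 10; 1; 3; 12; 7; 1; 11; 5; 12; 15; 10; 14; 2; 7; 0; 3; 9; 13; 6; 7; 2; 3; 14; 12; 13; 6; 10; 9; 4; 0; 11; 8; 14; 2; 4; 1; 6; 10; 13; 15; 5; 12; 0; 8; 9; 12; 8; 11; 0; 10; 3; 1; 13; 7; 4; 1; 4; 6; 3; 5; 10; 15; 11; 14; 13; 8; 5; 9; 13; 6; 11; 7; 0; 8; 14; 13; 7; 12; 11; 2; 1; 0; 6; 3; 7; 3; 8; 2; 1; 5; 10; 9; 8; 1; 3; 6; 15; 14; 10; 2; 8; 6; 0; 12; 11; 4; 9; 1; 12; 14; 2; 11; 10; 4; 14; 9; 4; 10; 13; 0; 5; 14; 12; 7; 4; 0; 3; 15; 2; 5; 9; 7; 13; 12; 8; 11; 5; 3; 1; 5; 2; 4; 9; 6; 7];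
 [:: 5; 4; 8; 9; 14; 10; 7; 11; 12; 13; 6; 0; 2; 1; 3; 1; 12; 2; 3; 15; 4; 11; 6; 13; 9; 14; 8; 0; 7; 9; 7; 12; 2; 10; 5; 3; 6; 8; 13; 14; 11; 15; 14; 2; 5; 6; 1; 3; 10; 0; 11; 4; 7; 13; 11; 4; 1; 6; 0; 12; 5; 15; 13; 10; 8; 1; 5; 10; 6; 13; 12; 11; 0; 4; 9; 8; 8; 0; 7; 2; 14; 13; 9; 3; 6; 13; 11; 0; 14; 12; 10; 3; 1; 7; 8; 14; 1; 3; 0; 9; 5; 15; 2; 3; 9; 14; 7; 12; 5; 4; 8; 4; 10; 9; 0; 13; 1; 2; 14; 12; 11; 10; 4; 7; 4; 11; 12; 0; 6; 9; 15; 6; 3; 10; 2; 14; 8; 2; 5; 10; 1; 7; 2; 9; 13; 1; 5; 11; 6; 4; 5; 7; 3; 8; 12];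
 [:: 5; 12; 1; 3; 2; 4; 15; 11; 6; 9; 13; 8; 14; 0; 7; 8; 4; 14; 9; 10; 11; 7; 12; 13; 0; 6; 2; 1; 3; 9; 2; 14; 6; 5; 1; 3; 10; 11; 0; 4; 7; 13; 7; 2; 12; 10; 5; 3; 6; 8; 13; 14; 15; 11; 5; 1; 6; 10; 13; 12; 11; 0; 4; 9; 8; 11; 4; 6; 1; 12; 0; 5; 15; 10; 13; 8; 8; 13; 0; 11; 14; 10; 12; 3; 1; 7; 0; 7; 2; 14; 13; 9; 3; 6; 8; 9; 3; 14; 12; 7; 5; 4; 14; 1; 3; 0; 5; 9; 15; 2; 2; 1; 14; 12; 10; 11; 4; 8; 4; 9; 10; 0; 13; 7; 11; 4; 0; 12; 6; 9; 2; 8; 5; 10; 1; 15; 6; 3; 2; 10; 14; 7; 13; 9; 5; 1; 2; 4; 11; 6; 7; 3; 5; 12; 8];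
 [:: 9; 4; 1; 12; 2; 7; 5; 10; 6; 3; 13; 8; 11; 15; 14; 8; 12; 5; 6; 14; 2; 3; 1; 0; 11; 10; 7; 4; 13; 5; 10; 9; 14; 12; 7; 11; 13; 2; 6; 0; 1; 3; 15; 4; 2; 3; 6; 11; 13; 9; 14; 8; 7; 0; 8; 11; 1; 7; 0; 14; 2; 13; 3; 9; 6; 5; 11; 0; 13; 14; 3; 12; 10; 1; 7; 1; 6; 4; 5; 0; 12; 13; 10; 15; 8; 13; 10; 6; 12; 0; 11; 4; 9; 8; 14; 3; 8; 10; 9; 4; 0; 13; 9; 14; 1; 2; 12; 4; 11; 10; 8; 1; 0; 3; 9; 15; 5; 2; 7; 12; 14; 5; 4; 7; 15; 3; 6; 14; 2; 10; 2; 8; 10; 5; 1; 4; 11; 6; 12; 0; 9; 9; 11; 6; 2; 13; 4; 7; 1; 5; 8; 7; 12; 5; 3];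
 [:: 9; 12; 8; 6; 5; 2; 14; 3; 1; 11; 0; 10; 7; 4; 13; 1; 4; 2; 12; 7; 5; 10; 6; 3; 13; 8; 15; 11; 14; 5; 4; 15; 3; 2; 6; 11; 9; 13; 8; 14; 7; 0; 9; 10; 14; 7; 12; 11; 13; 2; 0; 6; 1; 3; 8; 5; 0; 11; 13; 14; 3; 10; 12; 1; 7; 1; 11; 7; 0; 14; 2; 13; 3; 9; 6; 13; 6; 10; 12; 0; 11; 9; 4; 8; 6; 1; 4; 5; 12; 0; 10; 13; 15; 8; 9; 14; 2; 1; 12; 4; 10; 11; 3; 14; 8; 9; 10; 4; 0; 13; 8; 12; 7; 14; 5; 4; 1; 0; 3; 15; 9; 5; 2; 7; 8; 2; 10; 5; 1; 15; 3; 6; 2; 14; 10; 11; 4; 6; 0; 12; 9; 13; 2; 4; 9; 11; 6; 7; 5; 1; 7; 12; 8; 3; 5];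
 [:: 9; 2; 1; 10; 8; 12; 4; 15; 5; 6; 13; 7; 0; 11; 3; 13; 8; 4; 5; 7; 10; 6; 11; 12; 3; 2; 0; 14; 1; 6; 5; 10; 14; 3; 12; 1; 11; 9; 0; 4; 7; 8; 11; 4; 5; 15; 0; 3; 10; 7; 14; 13; 12; 9; 6; 9; 0; 1; 7; 13; 8; 3; 2; 14; 12; 3; 2; 0; 15; 11; 12; 14; 13; 1; 7; 8; 1; 13; 2; 4; 0; 11; 10; 6; 13; 14; 7; 5; 12; 9; 11; 1; 9; 4; 8; 3; 10; 14; 11; 2; 2; 4; 12; 13; 10; 6; 8; 6; 14; 10; 0; 9; 5; 1; 13; 2; 0; 14; 4; 15; 10; 9; 3; 8; 14; 11; 6; 5; 12; 3; 8; 1; 6; 10; 7; 8; 1; 13; 5; 9; 11; 5; 4; 4; 3; 0; 7; 12; 6; 2; 5; 2; 15; 7; 9];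
 [:: 9; 8; 13; 5; 4; 10; 7; 11; 6; 3; 12; 0; 2; 14; 1; 1; 2; 8; 10; 4; 12; 5; 15; 6; 7; 13; 0; 11; 3; 6; 4; 11; 15; 5; 0; 10; 3; 7; 14; 13; 12; 9; 10; 5; 3; 14; 1; 12; 9; 11; 4; 0; 8; 7; 6; 2; 3; 0; 15; 12; 11; 14; 13; 1; 7; 0; 9; 7; 1; 13; 8; 3; 2; 14; 12; 8; 14; 13; 5; 7; 9; 12; 11; 1; 1; 2; 13; 0; 4; 11; 10; 6; 9; 2; 4; 12; 13; 10; 6; 8; 8; 4; 3; 14; 10; 11; 2; 6; 13; 1; 2; 0; 14; 4; 10; 14; 9; 0; 5; 3; 14; 8; 6; 11; 15; 10; 9; 5; 6; 1; 10; 12; 3; 8; 7; 8; 13; 1; 5; 3; 4; 0; 9; 5; 11; 4; 2; 7; 6; 12; 5; 15; 2; 7; 9];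
 [:: 6; 2; 13; 14; 3; 5; 10; 11; 9; 12; 1; 7; 8; 0; 4; 1; 8; 5; 15; 11; 4; 3; 10; 0; 14; 7; 12; 13; 9; 9; 12; 4; 10; 8; 15; 5; 13; 7; 6; 11; 0; 3; 7; 10; 4; 5; 12; 3; 6; 11; 2; 0; 14; 1; 8; 9; 3; 1; 4; 0; 13; 2; 11; 6; 10; 0; 2; 7; 5; 13; 14; 9; 11; 12; 1; 6; 13; 7; 1; 3; 8; 2; 14; 12; 15; 0; 11; 12; 13; 14; 7; 1; 6; 4; 2; 0; 9; 14; 10; 5; 8; 2; 13; 1; 0; 14; 4; 9; 10; 14; 3; 11; 2; 12; 4; 13; 6; 10; 8; 5; 15; 12; 3; 8; 1; 6; 10; 9; 10; 8; 14; 3; 11; 6; 7; 9; 11; 5; 4; 3; 0; 4; 1; 13; 8; 5; 5; 2; 7; 15; 12; 6; 2; 9; 7];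
 [:: 6; 8; 1; 15; 5; 4; 11; 10; 3; 0; 14; 7; 12; 13; 9; 13; 2; 3; 14; 10; 5; 9; 11; 1; 12; 8; 7; 4; 0; 9; 10; 7; 5; 4; 3; 12; 11; 6; 2; 0; 14; 1; 4; 12; 8; 10; 5; 15; 7; 13; 6; 11; 0; 3; 8; 2; 0; 5; 7; 14; 13; 11; 9; 12; 1; 3; 9; 1; 0; 4; 2; 13; 11; 6; 10; 6; 15; 0; 12; 11; 13; 14; 7; 1; 7; 13; 1; 3; 8; 2; 14; 12; 6; 8; 13; 2; 1; 0; 14; 4; 2; 4; 9; 0; 10; 14; 5; 9; 12; 4; 13; 6; 10; 8; 14; 10; 3; 11; 2; 5; 6; 1; 10; 15; 12; 3; 8; 14; 8; 3; 6; 11; 9; 10; 7; 0; 3; 4; 9; 5; 11; 4; 13; 1; 8; 5; 5; 7; 15; 2; 2; 6; 12; 9; 7];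
 [:: 6; 9; 0; 10; 4; 5; 11; 8; 1; 3; 7; 13; 2; 14; 12; 3; 2; 8; 5; 10; 4; 11; 12; 0; 15; 1; 7; 14; 13; 8; 12; 7; 14; 5; 13; 2; 4; 0; 1; 10; 6; 11; 4; 10; 3; 15; 12; 9; 11; 13; 14; 7; 5; 1; 9; 2; 1; 6; 5; 13; 7; 15; 0; 11; 3; 13; 8; 2; 0; 11; 6; 12; 3; 1; 14; 6; 0; 4; 7; 8; 12; 1; 11; 9; 7; 14; 0; 3; 10; 13; 12; 9; 15; 3; 4; 14; 1; 10; 9; 13; 10; 11; 6; 8; 3; 14; 5; 10; 0; 2; 3; 12; 8; 14; 12; 9; 1; 6; 10; 9; 4; 8; 11; 2; 2; 10; 6; 13; 8; 6; 5; 14; 0; 4; 8; 7; 4; 12; 6; 3; 9; 2; 5; 1; 2; 13; 0; 15; 7; 5; 4; 11; 5; 9; 7];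
 [:: 6; 2; 3; 5; 8; 4; 10; 12; 11; 0; 15; 1; 7; 14; 13; 0; 9; 4; 10; 11; 5; 1; 8; 3; 7; 13; 2; 12; 14; 8; 10; 4; 15; 3; 9; 12; 11; 14; 13; 5; 7; 1; 7; 12; 5; 14; 2; 13; 0; 4; 1; 10; 6; 11; 9; 8; 13; 0; 2; 11; 6; 3; 12; 1; 14; 1; 2; 5; 6; 7; 13; 15; 0; 11; 3; 6; 7; 14; 0; 10; 3; 13; 12; 9; 4; 0; 8; 7; 1; 12; 9; 11; 13; 10; 6; 11; 8; 3; 14; 15; 4; 3; 1; 14; 10; 9; 5; 12; 14; 9; 1; 6; 10; 10; 2; 0; 3; 12; 8; 9; 2; 10; 6; 13; 8; 8; 4; 11; 2; 6; 14; 0; 4; 5; 8; 9; 3; 2; 7; 4; 6; 12; 5; 13; 0; 15; 1; 2; 7; 5; 4; 5; 11; 9; 7];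
 [:: 8; 9; 3; 14; 5; 12; 7; 4; 0; 13; 2; 1; 6; 10; 11; 0; 2; 3; 15; 4; 10; 9; 11; 12; 7; 5; 13; 14; 1; 6; 5; 11; 10; 4; 3; 8; 1; 13; 7; 2; 12; 14; 10; 4; 8; 5; 11; 12; 15; 0; 7; 1; 13; 14; 6; 2; 13; 7; 8; 0; 4; 11; 9; 12; 1; 1; 8; 14; 7; 3; 10; 0; 12; 13; 9; 9; 13; 7; 6; 5; 15; 11; 0; 3; 11; 2; 0; 12; 3; 6; 1; 14; 5; 15; 0; 2; 10; 3; 12; 8; 13; 9; 14; 12; 1; 6; 10; 14; 1; 3; 4; 9; 10; 10; 8; 11; 6; 14; 3; 6; 4; 2; 5; 8; 14; 0; 4; 9; 11; 2; 6; 10; 13; 8; 5; 3; 1; 2; 7; 9; 0; 13; 15; 8; 4; 12; 6; 2; 7; 4; 11; 5; 5; 7; 9];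
 [:: 8; 2; 0; 15; 3; 10; 4; 11; 9; 12; 5; 7; 14; 13; 1; 3; 9; 5; 14; 7; 12; 0; 4; 2; 13; 1; 6; 10; 11; 6; 4; 10; 5; 8; 12; 11; 15; 0; 7; 1; 13; 14; 11; 5; 4; 10; 3; 1; 8; 7; 13; 2; 12; 14; 6; 8; 1; 14; 7; 10; 3; 0; 12; 13; 9; 13; 2; 8; 7; 4; 0; 9; 11; 1; 12; 9; 2; 11; 0; 3; 12; 6; 14; 1; 7; 13; 5; 6; 15; 11; 0; 3; 5; 13; 9; 12; 14; 1; 6; 10; 15; 2; 0; 10; 3; 12; 8; 10; 8; 6; 11; 14; 3; 1; 14; 4; 3; 9; 10; 6; 8; 14; 0; 4; 2; 4; 5; 9; 6; 10; 13; 8; 11; 2; 5; 9; 7; 0; 13; 15; 3; 1; 2; 8; 2; 4; 6; 12; 7; 4; 5; 11; 5; 7; 9];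
 [:: 9; 4; 8; 3; 1; 10; 14; 15; 6; 12; 5; 0; 13; 2; 11; 2; 7; 4; 5; 11; 12; 1; 0; 3; 14; 6; 10; 8; 13; 6; 14; 10; 0; 9; 8; 12; 11; 3; 13; 1; 7; 5; 1; 13; 2; 12; 3; 9; 10; 15; 5; 4; 0; 14; 7; 15; 2; 6; 0; 8; 11; 13; 12; 9; 10; 9; 0; 4; 12; 2; 6; 14; 11; 3; 8; 5; 13; 7; 14; 6; 4; 12; 8; 3; 7; 8; 4; 3; 0; 11; 10; 6; 1; 9; 2; 1; 10; 4; 3; 0; 11; 13; 8; 4; 5; 7; 10; 14; 1; 6; 5; 10; 14; 3; 11; 15; 13; 12; 9; 9; 0; 14; 2; 12; 2; 7; 14; 13; 1; 8; 6; 10; 11; 1; 7; 11; 9; 2; 1; 4; 5; 2; 13; 15; 12; 6; 0; 5; 4; 7; 5; 7; 8; 9; 3];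
 [:: 9; 7; 2; 5; 4; 12; 11; 0; 1; 3; 14; 10; 6; 13; 8; 8; 4; 1; 3; 14; 10; 6; 15; 5; 12; 0; 13; 2; 11; 6; 13; 1; 2; 3; 12; 10; 9; 15; 5; 4; 0; 14; 10; 14; 9; 0; 12; 8; 3; 11; 13; 7; 1; 5; 7; 9; 0; 4; 12; 2; 6; 14; 11; 3; 8; 2; 15; 6; 0; 11; 8; 12; 13; 9; 10; 5; 7; 4; 8; 3; 11; 0; 10; 6; 1; 13; 14; 7; 6; 4; 12; 8; 3; 9; 8; 13; 5; 4; 10; 7; 14; 1; 1; 2; 10; 4; 3; 11; 0; 6; 11; 15; 13; 12; 9; 10; 5; 3; 14; 2; 14; 7; 13; 1; 0; 9; 14; 2; 12; 8; 1; 6; 11; 10; 7; 5; 2; 13; 9; 11; 2; 1; 4; 6; 0; 15; 12; 5; 4; 7; 5; 7; 8; 3; 9];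
 [:: 6; 4; 2; 0; 9; 14; 10; 11; 3; 8; 12; 1; 7; 13; 5; 8; 7; 2; 13; 1; 9; 10; 12; 3; 5; 15; 4; 0; 14; 9; 10; 14; 3; 1; 12; 5; 15; 6; 13; 0; 2; 11; 11; 12; 4; 5; 1; 0; 3; 14; 6; 10; 8; 13; 5; 15; 9; 7; 14; 13; 4; 6; 8; 12; 3; 2; 8; 4; 7; 0; 11; 3; 10; 6; 1; 7; 0; 6; 13; 12; 8; 11; 10; 9; 4; 0; 2; 12; 14; 6; 3; 11; 8; 6; 2; 13; 14; 3; 5; 10; 1; 8; 15; 11; 13; 9; 12; 9; 4; 10; 0; 11; 3; 7; 10; 4; 5; 14; 1; 8; 9; 10; 11; 6; 0; 2; 1; 2; 14; 12; 7; 14; 1; 13; 11; 12; 15; 9; 5; 6; 0; 7; 2; 4; 1; 2; 13; 4; 5; 5; 7; 7; 9; 3; 8];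
 [:: 6; 7; 8; 13; 2; 1; 10; 9; 3; 12; 5; 15; 4; 0; 14; 2; 4; 9; 0; 10; 14; 3; 11; 12; 8; 7; 1; 13; 5; 9; 12; 11; 5; 4; 0; 1; 14; 3; 10; 6; 8; 13; 14; 10; 1; 3; 5; 12; 6; 15; 13; 0; 2; 11; 5; 2; 4; 8; 7; 11; 0; 3; 10; 6; 1; 9; 15; 14; 7; 13; 4; 6; 8; 12; 3; 7; 4; 0; 2; 12; 14; 6; 3; 11; 8; 0; 6; 12; 13; 11; 8; 10; 9; 6; 8; 1; 15; 11; 13; 9; 12; 13; 2; 3; 14; 10; 5; 9; 10; 7; 5; 4; 14; 1; 4; 10; 11; 0; 3; 8; 2; 0; 1; 9; 11; 10; 6; 14; 7; 1; 13; 2; 14; 12; 5; 9; 6; 0; 11; 12; 15; 7; 2; 13; 2; 4; 1; 4; 5; 5; 7; 7; 3; 9; 8];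
 [:: 7; 15; 2; 3; 4; 14; 1; 8; 11; 13; 12; 6; 0; 9; 10; 9; 13; 1; 5; 10; 12; 2; 0; 4; 11; 3; 6; 14; 8; 5; 10; 11; 0; 2; 6; 4; 13; 7; 14; 3; 12; 8; 14; 12; 9; 3; 4; 0; 11; 7; 8; 10; 6; 1; 9; 4; 8; 0; 5; 13; 15; 6; 12; 11; 2; 2; 7; 3; 14; 1; 0; 8; 13; 6; 10; 6; 13; 8; 1; 7; 12; 11; 3; 5; 15; 12; 5; 3; 9; 10; 4; 0; 14; 9; 0; 10; 4; 5; 11; 14; 12; 2; 2; 5; 10; 13; 1; 7; 14; 8; 7; 14; 6; 10; 11; 4; 10; 3; 15; 1; 9; 2; 1; 3; 0; 11; 13; 8; 1; 14; 6; 12; 9; 13; 5; 4; 9; 7; 2; 15; 7; 12; 5; 2; 6; 11; 4; 1; 5; 13; 0; 8; 3; 9; 7];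
 [:: 7; 13; 9; 5; 1; 10; 12; 2; 0; 4; 11; 3; 6; 14; 8; 2; 15; 4; 3; 1; 14; 11; 8; 12; 13; 6; 0; 9; 10; 5; 12; 14; 9; 4; 3; 11; 0; 7; 8; 10; 6; 1; 11; 10; 2; 0; 6; 4; 13; 14; 7; 3; 12; 8; 9; 7; 2; 3; 14; 0; 1; 13; 8; 10; 6; 8; 4; 0; 13; 5; 6; 15; 12; 11; 2; 6; 15; 5; 12; 3; 10; 9; 4; 0; 14; 8; 13; 7; 1; 12; 3; 11; 5; 2; 5; 10; 13; 1; 14; 7; 0; 9; 4; 10; 11; 5; 12; 14; 2; 8; 10; 4; 15; 3; 1; 7; 14; 6; 11; 10; 9; 8; 13; 1; 14; 1; 2; 3; 11; 0; 6; 12; 9; 13; 5; 2; 15; 4; 9; 7; 2; 6; 7; 12; 5; 5; 13; 11; 4; 1; 0; 8; 9; 3; 7];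
 [:: 5; 15; 9; 0; 2; 10; 11; 4; 6; 7; 14; 13; 3; 8; 12; 2; 13; 9; 14; 12; 0; 11; 3; 4; 8; 7; 6; 10; 1; 7; 14; 1; 3; 4; 13; 12; 8; 11; 0; 6; 10; 9; 10; 1; 5; 2; 12; 4; 0; 3; 11; 14; 6; 8; 6; 4; 2; 1; 7; 13; 8; 11; 3; 12; 5; 8; 7; 12; 5; 15; 9; 10; 3; 0; 4; 14; 9; 5; 13; 0; 12; 15; 6; 2; 11; 3; 14; 1; 0; 8; 13; 6; 10; 8; 9; 14; 7; 10; 11; 6; 0; 2; 3; 15; 4; 10; 1; 5; 11; 10; 4; 12; 14; 2; 10; 5; 1; 13; 7; 14; 6; 2; 13; 1; 8; 9; 12; 13; 9; 3; 0; 11; 1; 14; 4; 12; 7; 5; 6; 2; 5; 9; 7; 15; 2; 11; 5; 0; 1; 4; 13; 3; 9; 8; 7];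
 [:: 5; 13; 2; 9; 12; 14; 11; 0; 4; 3; 8; 7; 6; 10; 1; 9; 15; 2; 0; 11; 10; 4; 6; 14; 7; 13; 3; 8; 12; 7; 10; 5; 1; 2; 12; 4; 0; 3; 11; 14; 6; 8; 1; 14; 4; 3; 12; 13; 11; 8; 0; 6; 10; 9; 6; 7; 8; 5; 12; 15; 10; 9; 3; 0; 4; 14; 2; 4; 7; 1; 8; 13; 3; 11; 12; 5; 9; 14; 3; 0; 1; 8; 13; 10; 6; 13; 5; 0; 12; 6; 15; 2; 11; 8; 2; 0; 15; 3; 10; 4; 1; 9; 14; 7; 11; 10; 6; 10; 5; 1; 13; 14; 7; 11; 5; 4; 10; 12; 14; 2; 6; 8; 1; 9; 12; 13; 13; 2; 9; 14; 1; 3; 11; 0; 6; 2; 4; 12; 7; 5; 5; 15; 2; 9; 7; 5; 0; 11; 13; 1; 4; 9; 3; 8; 7]].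
Lemma ok20 : all_ok 19 9 bl20 cols20. Proof. vm_compute. reflexivity. Qed.
Lemma ok26 : all_ok 25 12 bl26 cols26. Proof. vm_compute. reflexivity. Qed.
Lemma ok32 : all_ok 31 15 bl32 cols32. Proof. vm_compute. reflexivity. Qed.
Theorem lemma3p4 : forall v : nat, v \in [:: 20; 26; 32] ->
  exists B : {set {set 'I_v}}, mcDSQS B.
Proof.
move=> v; rewrite !inE => /or3P [] /eqP ->.
- exact: (assemble ok20).
- exact: (assemble ok26).
- exact: (assemble ok32).
Qed.
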